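(* Let $U\subset\mathbb R^n$ be open, let $X$ be a $C^\infty$ vector field on $U$ and $V:U\to\mathbb R$ a $C^\infty$ function satisfying assumptions A1, A2 and A3$'$ (stated in the context) for some $c>0$. Then every trajectory of $\dot x = X(x)-\nabla V(x)$ starting in $V^{-1}([0,c])$ stays in $V^{-1}([0,c])$ for all $t\ge0$ and converges to the set $V^{-1}(0)$ as $t\to\infty$. Moreover $V^{-1}(0)$ is an invariant set of both $\dot x=X(x)$ and $\dot x = X(x)-\nabla V(x)$.
   Context: Write $x=(x^1,\dots,x^n)$. Assumptions: (A1) $V(x)\ge0$ for all $x\in U$, $V^{-1}(0)\ne\emptyset$, and $\nabla V(x)\cdot X(x)=0$ for all $x\in U$. (A2) $c>0$ is such that $V^{-1}([0,c])$ is a compact subset of $U$. Define $X^0 g=g$, $Xg = X\cdot\nabla g$, $X^k g = X(X^{k-1}g)$ for $k\ge 2$, and $$S=\Big\{x\in U : X^k\tfrac{\partial V}{\partial x^i}(x)=0 \text{ for all } k\ge0,\ 1\le i\le n\Big\}.$$ (A3$'$) $S\cap V^{-1}([0,c])\subset V^{-1}(0)$. *)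

(* Defs.v *)
From Stdlib Require Import Reals List.
From mathcomp Require Import ssreflect ssrbool eqtype ssrnat seq fintype.
Set Implicit Arguments.
Open Scope R_scope.

Definition Rn (n : nat) := 'I_n -> R.

Definition rsum {n : nat} (f : 'I_n -> R) : R :=
  foldr (fun j acc => f j + acc) 0 (enum 'I_n).

Definition enorm {n : nat} (v : Rn n) : R := sqrt (rsum (fun i => v i ^ 2)).
Definition vsub {n : nat} (x y : Rn n) : Rn n := fun i => x i - y i.

Definition is_open {n : nat} (U : Rn n -> Prop) : Prop :=
  forall x, U x -> exists r, 0 < r /\ forall y, enorm (vsub y x) < r -> U y.

Definition is_compact {n : nat} (K : Rn n -> Prop) : Prop :=
  forall (J : Type) (O : J -> Rn n -> Prop),
    (forall j, is_open (O j)) ->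
    (forall x, K x -> exists j, O j x) ->
    exists l : list J, forall x, K x -> exists j, List.In j l /\ O j x.

Definition cont_on {n : nat} (U : Rn n -> Prop) (f : Rn n -> R) : Prop :=
  forall x, U x -> forall eps, 0 < eps -> exists delta, 0 < delta /\
    forall y, U y -> enorm (vsub y x) < delta -> Rabs (f y - f x) < eps.

Definition upd {n : nat} (x : Rn n) (i : 'I_n) (t : R) : Rn n :=
  fun j => if j == i then t else x j.

Definition partial {n : nat} (f : Rn n -> R) (i : 'I_n) (x : Rn n) (l : R) : Prop :=
  derivable_pt_lim (fun t => f (upd x i t)) (x i) l.

Fixpoint Ck {n : nat} (U : Rn n -> Prop) (k : nat) (f : Rn n -> R) : Prop :=
  match k with
  | O => cont_on U f
  | S k' => cont_on U f /\ forall i, exists g,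
              (forall x, U x -> partial f i x (g x)) /\ Ck U k' g
  end.

Definition smooth {n : nat} (U : Rn n -> Prop) (f : Rn n -> R) : Prop :=
  forall k, Ck U k f.

(* lie_iter U X k g h : h = X^k g on U, where X g = X . grad g. *)
Inductive lie_iter {n : nat} (U : Rn n -> Prop) (X : Rn n -> Rn n)
  : nat -> (Rn n -> R) -> (Rn n -> R) -> Prop :=
| lie0 g : lie_iter U X 0 g g
| lieS k g h (p : 'I_n -> Rn n -> R) :
    lie_iter U X k g h ->
    (forall j x, U x -> partial h j x (p j x)) ->
    lie_iter U X (S k) g (fun x => rsum (fun j => X x j * p j x)).

Definition Sset {n : nat} (U : Rn n -> Prop) (X : Rn n -> Rn n) (V : Rn n -> R)
  (x : Rn n) : Prop :=
  U x /\ forall (i : 'I_n) (g : Rn n -> R),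
    (forall y, U y -> partial V i y (g y)) ->
    forall k h, lie_iter U X k g h -> h x = 0.

Definition deriv_in (I : R -> Prop) (f : R -> R) (t l : R) : Prop :=
  forall eps, 0 < eps -> exists delta, 0 < delta /\
    forall s, I s -> s <> t -> Rabs (s - t) < delta ->
      Rabs ((f s - f t) / (s - t) - l) < eps.

Definition is_interval (I : R -> Prop) : Prop :=
  forall s t u, I s -> I u -> s <= t -> t <= u -> I t.

Definition sol {n : nat} (U : Rn n -> Prop) (F : Rn n -> Rn n)
  (I : R -> Prop) (x : R -> Rn n) : Prop :=
  forall t, I t -> U (x t) /\ forall i, deriv_in I (fun s => x s i) t (F (x t) i).

(* A is invariant: every solution on an interval through 0 starting in A stays in A
   (forward and backward in time). *)
Definition invariant_set {n : nat} (U : Rn n -> Prop) (F : Rn n -> Rn n)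
  (A : Rn n -> Prop) : Prop :=
  forall (I : R -> Prop) (x : R -> Rn n),
    is_interval I -> I 0 -> sol U F I x -> A (x 0) -> forall t, I t -> A (x t).

Definition converges_to_set {n : nat} (x : R -> Rn n) (A : Rn n -> Prop) : Prop :=
  forall eps, 0 < eps -> exists T, forall t, T <= t ->
    exists y, A y /\ enorm (vsub (x t) y) < eps.

(* Main.v *)
From Coquelicot Require Import Coquelicot.
Require Import Defs.
From Stdlib Require Import Reals Lra Lia ZArith List FunctionalExtensionality ClassicalEpsilon Classical.
From mathcomp Require Import ssreflect ssrfun ssrbool eqtype ssrnat seq fintype.
Open Scope R_scope.
Set Implicit Arguments.

Definition lsum {n : nat} (l : seq 'I_n) (f : 'I_n -> R) : R :=
  foldr (fun j acc => f j + acc) 0 l.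

Lemma rsum_lsum n (f : 'I_n -> R) : rsum f = lsum (enum 'I_n) f.
Proof. reflexivity. Qed.

Lemma lsum_ext n (l : seq 'I_n) f g : (forall j, f j = g j) -> lsum l f = lsum l g.
Proof. move=> H; elim: l => //= a l ->; by rewrite H. Qed.

Lemma lsum_plus n (l : seq 'I_n) f g : lsum l (fun j => f j + g j) = lsum l f + lsum l g.
Proof. elim: l => /= [|a l ->]; lra. Qed.

Lemma lsum_scal n (l : seq 'I_n) c f : lsum l (fun j => c * f j) = c * lsum l f.
Proof. elim: l => /= [|a l ->]; ring. Qed.

Lemma lsum_le n (l : seq 'I_n) f g : (forall j, f j <= g j) -> lsum l f <= lsum l g.
Proof. move=> H; elim: l => /= [|a l IH]; [lra|]. have := H a; lra. Qed.

Lemma lsum_nonneg n (l : seq 'I_n) f : (forall j, 0 <= f j) -> 0 <= lsum l f.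
Proof. move=> H; elim: l => /= [|a l IH]; [lra|]. have := H a; lra. Qed.

Lemma lsum_abs n (l : seq 'I_n) f : Rabs (lsum l f) <= lsum l (fun j => Rabs (f j)).
Proof.
  elim: l => /= [|a l IH]; first by rewrite Rabs_R0; lra.
  have := Rabs_triang (f a) (lsum l f); lra.
Qed.

Lemma lsum_const_le n (l : seq 'I_n) f B : (forall j, f j <= B) -> lsum l f <= INR (size l) * B.
Proof.
  move=> H; elim: l => [|a l IH]; first by rewrite /=; lra.
  change (INR (size (a :: l))) with (INR (S (size l))); rewrite S_INR.
  change (lsum (a :: l) f) with (f a + lsum l f). have := H a; lra.
Qed.

Lemma lsum_mem n (l : seq 'I_n) f j : (forall k, 0 <= f k) -> j \in l -> f j <= lsum l f.
Proof.
  move=> H; elim: l => //= a l IH; rewrite in_cons => /orP [/eqP ->|Hj].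
  - have := lsum_nonneg l f H; lra.
  - have := IH Hj; have := H a; lra.
Qed.

Lemma size_enum n : size (enum 'I_n) = n.
Proof. by rewrite size_enum_ord. Qed.

Lemma rsum_ext n (f g : 'I_n -> R) : (forall j, f j = g j) -> rsum f = rsum g.
Proof. apply: lsum_ext. Qed.
Lemma rsum_plus n (f g : 'I_n -> R) : rsum (fun j => f j + g j) = rsum f + rsum g.
Proof. apply: lsum_plus. Qed.
Lemma rsum_scal n c (f : 'I_n -> R) : rsum (fun j => c * f j) = c * rsum f.
Proof. apply: lsum_scal. Qed.
Lemma rsum_le n (f g : 'I_n -> R) : (forall j, f j <= g j) -> rsum f <= rsum g.
Proof. apply: lsum_le. Qed.
Lemma rsum_nonneg n (f : 'I_n -> R) : (forall j, 0 <= f j) -> 0 <= rsum f.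
Proof. apply: lsum_nonneg. Qed.
Lemma rsum_abs n (f : 'I_n -> R) : Rabs (rsum f) <= rsum (fun j => Rabs (f j)).
Proof. apply: lsum_abs. Qed.
Lemma rsum_const_le n (f : 'I_n -> R) B : (forall j, f j <= B) -> rsum f <= INR n * B.
Proof. move=> H; have := @lsum_const_le n (enum (ordinal n)) f B H; by rewrite size_enum. Qed.
Lemma rsum_mem n (f : 'I_n -> R) j : (forall k, 0 <= f k) -> f j <= rsum f.
Proof. move=> H; apply: lsum_mem => //; by rewrite mem_enum. Qed.
Lemma rsum_zero n : rsum (fun j : 'I_n => 0) = 0.
Proof. rewrite /rsum; elim: (enum 'I_n) => //= a l ->; lra. Qed.
Lemma rsum_minus n (f g : 'I_n -> R) : rsum (fun j => f j - g j) = rsum f - rsum g.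
Proof.
  have -> : rsum (fun j => f j - g j) = rsum (fun j => f j + (-1) * g j).
    apply: rsum_ext => j; ring.
  rewrite rsum_plus rsum_scal; ring.
Qed.

Definition asum {n : nat} (v : Rn n) : R := rsum (fun j => Rabs (v j)).
Definition box {n : nat} (z : Rn n) (r : R) (a : Rn n) : Prop := forall j, Rabs (a j - z j) < r.

Lemma asum_nonneg n (v : Rn n) : 0 <= asum v.
Proof. apply: rsum_nonneg => j; apply: Rabs_pos. Qed.

Lemma lsum_sq n (l : seq 'I_n) (v : Rn n) :
  lsum l (fun i => v i ^ 2) <= (lsum l (fun j => Rabs (v j))) ^ 2.
Proof.
  elim: l => /= [|a l IH]; first lra.
  have H1 := lsum_nonneg l (fun j => Rabs (v j)) (fun j => Rabs_pos (v j)).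
  have H2 := Rabs_pos (v a).
  have H3 : v a ^ 2 = Rabs (v a) ^ 2 by rewrite pow2_abs.
  nra.
Qed.

Lemma enorm_le_asum n (v : Rn n) : enorm v <= asum v.
Proof.
  rewrite /enorm /asum.
  have H := lsum_sq (enum 'I_n) v.
  have H0 := asum_nonneg v.
  rewrite -[X in _ <= X]sqrt_pow2; last exact H0.
  apply: sqrt_le_1_alt. exact H.
Qed.

Lemma coord_le_enorm n (v : Rn n) j : Rabs (v j) <= enorm v.
Proof.
  rewrite /enorm.
  have H : v j ^ 2 <= rsum (fun i => v i ^ 2).
    apply: (rsum_mem (fun i => v i ^ 2)) => k; apply: pow2_ge_0.
  rewrite -(sqrt_pow2 (Rabs (v j))); last apply: Rabs_pos.
  apply: sqrt_le_1_alt. rewrite pow2_abs. exact H.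
Qed.

Lemma asum_box n (z a : Rn n) r : box z r a -> asum (vsub a z) <= INR n * r.
Proof.
  move=> H; apply: rsum_const_le => j; rewrite /vsub; have := H j; lra.
Qed.

Lemma enorm_box n (z a : Rn n) r : 0 < r -> box z (r / (INR n + 1)) a -> enorm (vsub a z) < r.
Proof.
  move=> Hr H.
  have Hn := pos_INR n.
  have H1 := asum_box H. have H2 := enorm_le_asum (vsub a z).
  have H3 : INR n * (r / (INR n + 1)) < r.
    apply: (Rmult_lt_reg_r (INR n + 1)); first lra.
    field_simplify; try lra.
  lra.
Qed.

Lemma box_of_enorm n (z a : Rn n) r : enorm (vsub a z) < r -> box z r a.
Proof. move=> H j; have H0 := coord_le_enorm (vsub a z) j; change (vsub a z j) with (a j - z j) in H0; lra. Qed.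

Lemma upd_eq n (x : Rn n) i t : upd x i t i = t.
Proof. by rewrite /upd eqxx. Qed.
Lemma upd_neq n (x : Rn n) i t j : j != i -> upd x i t j = x j.
Proof. rewrite /upd => /negbTE ->. done. Qed.
Lemma upd_upd n (x : Rn n) i t s : upd (upd x i t) i s = upd x i s.
Proof. apply: functional_extensionality => j; rewrite /upd; by case: (j == i). Qed.
Lemma upd_same n (x : Rn n) i : upd x i (x i) = x.
Proof. apply: functional_extensionality => j; rewrite /upd; case: eqP => // ->. done. Qed.

Lemma MVT1 (phi d : R -> R) a b :
  (forall t, Rmin a b <= t <= Rmax a b -> derivable_pt_lim phi t (d t)) ->
  exists c, Rmin a b <= c <= Rmax a b /\ phi b - phi a = d c * (b - a).
Proof.
  move=> H.
  case: (Rtotal_order a b) => [Hab|[Hab|Hab]].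
  - have [c [Hc1 Hc2]] := @MVT_cor2 phi d _ _ Hab (fun c Hc => H c ltac:(rewrite Rmin_left ?Rmax_right; lra)).
    exists c; split; last done. rewrite Rmin_left ?Rmax_right; lra.
  - subst; exists b; split; [rewrite Rmin_left ?Rmax_left; lra | ring].
  - have [c [Hc1 Hc2]] := @MVT_cor2 phi d _ _ Hab (fun c Hc => H c ltac:(rewrite Rmin_right ?Rmax_left; lra)).
    exists c; split; [rewrite Rmin_right ?Rmax_left; lra | lra].
Qed.

Lemma fin_min n (P : 'I_n -> R -> Prop) :
  (forall j r r', 0 < r' <= r -> P j r -> P j r') ->
  (forall j, exists r, 0 < r /\ P j r) -> exists r, 0 < r /\ forall j, P j r.
Proof.
  move=> Hm H.
  suff : forall l : seq 'I_n, exists r, 0 < r /\ forall j, j \in l -> P j r.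
    move=> /(_ (enum 'I_n)) [r [Hr Hl]]; exists r; split => // j; apply: Hl; by rewrite mem_enum.
  elim => [|a l [r [Hr Hl]]]; first by exists 1; split => //; lra.
  have [ra [Hra Pa]] := H a.
  exists (Rmin r ra); split; first by apply: Rmin_glb_lt.
  move=> j; rewrite in_cons => /orP [/eqP ->|Hj].
  - apply: (Hm a ra) => //; split; [by apply: Rmin_glb_lt | apply: Rmin_r].
  - apply: (Hm j r); last by apply: Hl. split; [by apply: Rmin_glb_lt | apply: Rmin_l].
Qed.

Lemma open_box n (U : Rn n -> Prop) z : is_open U -> U z -> exists r, 0 < r /\ forall a, box z r a -> U a.
Proof.
  move=> HU Hz; have [r0 [Hr0 H0]] := HU z Hz.
  have Hn := pos_INR n.
  exists (r0 / (INR n + 1)); split; first by apply: Rdiv_lt_0_compat; lra.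
  move=> a Ha; apply: H0; by apply: enorm_box.
Qed.

Lemma cont_box n (U : Rn n -> Prop) f z : is_open U -> cont_on U f -> U z ->
  forall eps, 0 < eps -> exists r, 0 < r /\ forall a, box z r a -> U a /\ Rabs (f a - f z) < eps.
Proof.
  move=> HU Hf Hz eps He.
  have [r0 [Hr0 H0]] := open_box z HU Hz.
  have [d [Hd Hd']] := Hf z Hz eps He.
  have Hn := pos_INR n.
  exists (Rmin r0 (d / (INR n + 1))); split.
    apply: Rmin_glb_lt => //; apply: Rdiv_lt_0_compat; lra.
  move=> a Ha.
  have Ua : U a. apply: H0 => j; have := Ha j; have := Rmin_l r0 (d / (INR n + 1)); lra.
  split => //; apply: Hd' => //; apply: enorm_box => // j.
  have := Ha j; have := Rmin_r r0 (d / (INR n + 1)); lra.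
Qed.

Lemma cont_box_fam n (U : Rn n -> Prop) (g : 'I_n -> Rn n -> R) z : is_open U ->
  (forall j, cont_on U (g j)) -> U z ->
  forall eps, 0 < eps -> exists r, 0 < r /\ forall a, box z r a -> U a /\ forall j, Rabs (g j a - g j z) < eps.
Proof.
  move=> HU Hg Hz eps He.
  have [r0 [Hr0 H0]] := open_box z HU Hz.
  have [r [Hr Hj]] := @fin_min n (fun j r => forall a, box z r a -> Rabs (g j a - g j z) < eps)
    ltac:(move=> j r r' Hr' H a Ha; apply: H => k; have := Ha k; lra)
    ltac:(move=> j; have [r [Hr H]] := cont_box z HU (Hg j) Hz He; exists r; split => // a Ha; by case: (H a Ha)).
  exists (Rmin r0 r); split; first by apply: Rmin_glb_lt.
  move=> a Ha; split.
  - apply: H0 => k; have := Ha k; have := Rmin_l r0 r; lra.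
  - move=> j; apply: Hj => k; have := Ha k; have := Rmin_r r0 r; lra.
Qed.

Lemma partial_line n (f : Rn n -> R) j w t l :
  partial f j (upd w j t) l -> derivable_pt_lim (fun s => f (upd w j s)) t l.
Proof.
  rewrite /partial upd_eq.
  have -> : (fun s => f (upd (upd w j t) j s)) = (fun s => f (upd w j s)).
    apply: functional_extensionality => s; by rewrite upd_upd.
  done.
Qed.

Definition wmix {n} (a b : Rn n) (l : seq 'I_n) : Rn n := fun j => if j \in l then b j else a j.

Lemma SD n (U : Rn n -> Prop) (f : Rn n -> R) (g : 'I_n -> Rn n -> R) z :
  is_open U -> (forall j x, U x -> partial f j x (g j x)) -> (forall j, cont_on U (g j)) -> U z ->
  forall eps, 0 < eps -> exists r, 0 < r /\ (forall a, box z r a -> U a) /\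
    forall a b, box z r a -> box z r b ->
      Rabs (f b - f a - rsum (fun j => g j z * (b j - a j))) <= eps * asum (vsub b a).
Proof.
  move=> HU Hf Hg Hz eps He.
  have [r [Hr Hb]] := @cont_box_fam n U g z HU Hg Hz eps He.
  exists r; split => //; split; first by move=> a /Hb [].
  move=> a b Ha Hb'.
  have Hw : forall l, box z r (wmix a b l).
    move=> l j; rewrite /wmix; case: (j \in l); [apply: Hb' | apply: Ha].
  suff Hl : forall l : seq 'I_n, uniq l ->
    Rabs (f (wmix a b l) - f a - lsum l (fun j => g j z * (b j - a j))) <= eps * lsum l (fun j => Rabs (vsub b a j)).
    have := Hl (enum 'I_n) (enum_uniq _).
    have -> : wmix a b (enum 'I_n) = b.
      apply: functional_extensionality => j; by rewrite /wmix mem_enum.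
    done.
  elim => [|j l IH] /=.
  - move=> _; have -> : wmix a b [::] = a by apply: functional_extensionality => j; rewrite /wmix.
    rewrite Rminus_diag Rminus_0_r Rabs_R0; lra.
  - move=> /andP [Hjl Hu]; have IH' := IH Hu.
    have Ew : wmix a b (j :: l) = upd (wmix a b l) j (b j).
      apply: functional_extensionality => k; rewrite /wmix /upd in_cons.
      case: eqP => [->|_] //=.
    have Ea : wmix a b l j = a j by rewrite /wmix (negbTE Hjl).
    set w := wmix a b l in IH' Ew Ea.
    have [c [Hc Hc']] := @MVT1 (fun t => f (upd w j t)) (fun t => g j (upd w j t)) (a j) (b j)
      ltac:(move=> t Ht; have Hbx : box z r (upd w j t);
         [ move=> k; rewrite /upd; case: eqP => [->|_]; [ | apply: (Hw l)];
           have := Ha j; have := Hb' j; move: Ht; rewrite /Rmin /Rmax;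
           case: Rle_dec => _; move=> Ht; split_Rabs; lra
         | have [Uu _] := Hb _ Hbx; have := Hf j _ Uu; apply: partial_line ]).
    have Hbc : box z r (upd w j c).
      move=> k; rewrite /upd; case: eqP => [->|_]; [ | apply: (Hw l)].
      have := Ha j; have := Hb' j; move: Hc; rewrite /Rmin /Rmax;
      case: Rle_dec => _; move=> Hc; split_Rabs; lra.
    have [_ Hgc] := Hb _ Hbc; have Hgj := Hgc j.
    rewrite Ew. rewrite -Ea upd_same in Hc'.
    rewrite Ea in Hc'.
    set D := g j (upd w j c) in Hc' Hgj.
    change (lsum (j :: l) (fun j0 => g j0 z * (b j0 - a j0))) with (g j z * (b j - a j) + lsum l (fun j0 => g j0 z * (b j0 - a j0))).
    change (lsum (j :: l) (fun j0 => Rabs (vsub b a j0))) with (Rabs (vsub b a j) + lsum l (fun j0 => Rabs (vsub b a j0))).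
    have E2 : Rabs (D * (b j - a j) - g j z * (b j - a j)) <= eps * Rabs (b j - a j).
      rewrite -Rmult_minus_distr_r Rabs_mult; apply: Rmult_le_compat_r; [apply: Rabs_pos | lra].
    rewrite /vsub.
    move: IH' E2; rewrite /vsub; set S1 := lsum l _; set S2 := lsum l _; move=> IH' E2.
    have E3 : f (upd w j (b j)) - f a - (g j z * (b j - a j) + S1) =
       (f w - f a - S1) + (D * (b j - a j) - g j z * (b j - a j)) by rewrite -Hc'; ring.
    rewrite E3; have := Rabs_triang (f w - f a - S1) (D * (b j - a j) - g j z * (b j - a j)); lra.
Qed.

Lemma deriv_in_cont I f t l : deriv_in I f t l ->
  exists d, 0 < d /\ forall s, I s -> Rabs (s - t) < d -> Rabs (f s - f t) <= (Rabs l + 1) * Rabs (s - t).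
Proof.
  move=> H; have [d [Hd Hd']] := H 1 Rlt_0_1.
  exists d; split => // s Is Hs.
  case: (Req_dec s t) => [->|Hst]; first by rewrite !Rminus_diag Rabs_R0; lra.
  have H1 := Hd' s Is Hst Hs.
  have Hst' : s - t <> 0 by lra.
  have E : f s - f t = ((f s - f t) / (s - t)) * (s - t) by field.
  rewrite E Rabs_mult.
  apply: Rmult_le_compat_r; first apply: Rabs_pos.
  have := Rabs_triang_inv ((f s - f t) / (s - t)) l; lra.
Qed.

Lemma deriv_in_sub (I J : R -> Prop) f t l :
  (exists d, 0 < d /\ forall s, I s -> Rabs (s - t) < d -> J s) -> deriv_in J f t l -> deriv_in I f t l.
Proof.
  move=> [d [Hd HIJ]] H eps He; have [d' [Hd' H']] := H eps He.
  exists (Rmin d d'); split; first by apply: Rmin_glb_lt.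
  move=> s Is Hst Hs; apply: H' => //.
  - apply: HIJ => //; have := Rmin_l d d'; lra.
  - have := Rmin_r d d'; lra.
Qed.

Lemma deriv_in_union (I J1 J2 : R -> Prop) f t l :
  (exists d, 0 < d /\ forall s, I s -> Rabs (s - t) < d -> J1 s \/ J2 s) ->
  deriv_in J1 f t l -> deriv_in J2 f t l -> deriv_in I f t l.
Proof.
  move=> [d [Hd HIJ]] H1 H2 eps He.
  have [d1 [Hd1 H1']] := H1 eps He; have [d2 [Hd2 H2']] := H2 eps He.
  exists (Rmin d (Rmin d1 d2)); split; first by repeat apply: Rmin_glb_lt.
  move=> s Is Hst Hs.
  have := Rmin_l d (Rmin d1 d2); have := Rmin_r d (Rmin d1 d2); have := Rmin_l d1 d2; have := Rmin_r d1 d2.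
  move=> ? ? ? ?.
  case: (HIJ s Is ltac:(lra)) => Hs'; [apply: H1' | apply: H2'] => //; lra.
Qed.

Lemma deriv_in_ext (I : R -> Prop) f g t l :
  (forall s, I s -> f s = g s) -> I t -> deriv_in I f t l -> deriv_in I g t l.
Proof.
  move=> E It H eps He; have [d [Hd H']] := H eps He; exists d; split => // s Is Hst Hs.
  rewrite -!E //; by apply: H'.
Qed.

Lemma deriv_in_shift (I : R -> Prop) f t l a :
  deriv_in I f t l -> deriv_in (fun s => I (s - a)) (fun s => f (s - a)) (t + a) l.
Proof.
  move=> H eps He; have [d [Hd H']] := H eps He; exists d; split => // s Is Hst Hs.
  have E : s - (t + a) = (s - a) - t by ring.
  have E2 : t + a - a = t by ring.
  rewrite E E2; apply: H' => //; [lra | by rewrite -E].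
Qed.

Lemma derivable_deriv_in (I : R -> Prop) f t l : derivable_pt_lim f t l -> deriv_in I f t l.
Proof.
  move=> H eps He; have [d Hd] := H eps He; exists d; split; first by apply: cond_pos.
  move=> s Is Hst Hs.
  have := Hd (s - t) ltac:(lra) Hs. by have -> : t + (s - t) = s by ring.
Qed.

Lemma deriv_in_derivable (I : R -> Prop) f g t l :
  deriv_in I f t l -> (exists d, 0 < d /\ forall s, Rabs (s - t) < d -> I s /\ g s = f s) -> g t = f t ->
  derivable_pt_lim g t l.
Proof.
  move=> H [d [Hd Hg]] Ht eps He; have [d' [Hd' H']] := H eps He.
  have Hm : 0 < Rmin d d' by apply: Rmin_glb_lt.
  exists (mkposreal _ Hm) => h Hh Hh'; simpl in Hh'.
  have Hh1 : Rabs (t + h - t) < Rmin d d' by have -> : t + h - t = h by ring.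
  have [I1 E1] := Hg (t + h) ltac:(have := Rmin_l d d'; lra).
  rewrite E1 Ht.
  have := H' (t + h) I1 ltac:(lra) ltac:(have := Rmin_r d d'; lra).
  by have -> : t + h - t = h by ring.
Qed.

Lemma deriv_in_plus (I : R -> Prop) f g t a b :
  deriv_in I f t a -> deriv_in I g t b -> deriv_in I (fun s => f s + g s) t (a + b).
Proof.
  move=> H1 H2 eps He.
  have [d1 [Hd1 H1']] := H1 (eps/2) ltac:(lra); have [d2 [Hd2 H2']] := H2 (eps/2) ltac:(lra).
  exists (Rmin d1 d2); split; first by apply: Rmin_glb_lt.
  move=> s Is Hst Hs.
  have A1 := H1' s Is Hst ltac:(have := Rmin_l d1 d2; lra).
  have A2 := H2' s Is Hst ltac:(have := Rmin_r d1 d2; lra).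
  have Hst' : s - t <> 0 by lra.
  have E : (f s + g s - (f t + g t)) / (s - t) - (a + b) =
    ((f s - f t) / (s - t) - a) + ((g s - g t) / (s - t) - b) by field.
  rewrite E; have := Rabs_triang ((f s - f t) / (s - t) - a) ((g s - g t) / (s - t) - b); lra.
Qed.

Lemma deriv_in_const (I : R -> Prop) c t : deriv_in I (fun _ => c) t 0.
Proof. apply: derivable_deriv_in; apply: derivable_pt_lim_const. Qed.

Lemma deriv_in_scal (I : R -> Prop) f t a c :
  deriv_in I f t a -> deriv_in I (fun s => c * f s) t (c * a).
Proof.
  move=> H eps He.
  have [d [Hd H']] := H (eps / (Rabs c + 1)) ltac:(apply: Rdiv_lt_0_compat; have := Rabs_pos c; lra).
  exists d; split => // s Is Hst Hs.
  have Hst' : s - t <> 0 by lra.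
  have E : (c * f s - c * f t) / (s - t) - c * a = c * ((f s - f t) / (s - t) - a) by field.
  rewrite E Rabs_mult.
  have := H' s Is Hst Hs. have Hc := Rabs_pos c.
  set q := Rabs (_ - a) => Hq.
  have : Rabs c * q <= Rabs c * (eps / (Rabs c + 1)) by apply: Rmult_le_compat_l; lra.
  have : Rabs c * (eps / (Rabs c + 1)) < eps.
    apply: (Rmult_lt_reg_r (Rabs c + 1)); first lra. field_simplify; lra.
  lra.
Qed.

Lemma deriv_in_mult (I : R -> Prop) f g t a b :
  I t -> deriv_in I f t a -> deriv_in I g t b -> deriv_in I (fun s => f s * g s) t (a * g t + f t * b).
Proof.
  move=> It H1 H2.
  (* f s g s - f t g t = (f s - f t) g s + f t (g s - g t) *)
  have Hc := deriv_in_cont H2.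
  move=> eps He.
  have [dc [Hdc Hc']] := Hc.
  have Hpos1 : 0 < eps / 3 / (Rabs (g t) + 1) by apply: Rdiv_lt_0_compat; have := Rabs_pos (g t); lra.
  have [d1 [Hd1 H1']] := H1 (eps / 3 / (Rabs (g t) + 1)) Hpos1.
  set K := Rabs a + eps / 3 / (Rabs (g t) + 1).
  have HK : 0 < K by rewrite /K; have := Rabs_pos a; lra.
  have [d2 [Hd2 H2']] := H2 (eps / 3 / (Rabs (f t) + 1)) ltac:(apply: Rdiv_lt_0_compat; have := Rabs_pos (f t); lra).
  set e3 := eps / 3 / (K * (Rabs b + 1)).
  have He3 : 0 < e3 by rewrite /e3; apply: Rdiv_lt_0_compat; [lra | have := Rabs_pos b; nra].
  exists (Rmin (Rmin d1 d2) (Rmin dc e3)); split; first by repeat apply: Rmin_glb_lt.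
  move=> s Is Hst Hs.
  have := Rmin_l (Rmin d1 d2) (Rmin dc e3); have := Rmin_r (Rmin d1 d2) (Rmin dc e3).
  have := Rmin_l d1 d2; have := Rmin_r d1 d2; have := Rmin_l dc e3; have := Rmin_r dc e3.
  move=> ? ? ? ? ? ?.
  have A1 := H1' s Is Hst ltac:(lra). have A2 := H2' s Is Hst ltac:(lra).
  have A3 := Hc' s Is ltac:(lra).
  have Hst' : s - t <> 0 by lra.
  set qf := (f s - f t) / (s - t) in A1; set qg := (g s - g t) / (s - t) in A2.
  have E : (f s * g s - f t * g t) / (s - t) - (a * g t + f t * b) =
    (qf - a) * g t + f t * (qg - b) + qf * (g s - g t) by rewrite /qf /qg; field.
  rewrite E.
  have T1 : Rabs ((qf - a) * g t) <= eps / 3.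
    rewrite Rabs_mult. have Hg := Rabs_pos (g t).
    have : Rabs (qf - a) * Rabs (g t) <= eps / 3 / (Rabs (g t) + 1) * Rabs (g t) by apply: Rmult_le_compat_r; lra.
    have : eps / 3 / (Rabs (g t) + 1) * Rabs (g t) <= eps / 3.
      apply: (Rmult_le_reg_r (Rabs (g t) + 1)); first lra. field_simplify; nra.
    lra.
  have T2 : Rabs (f t * (qg - b)) <= eps / 3.
    rewrite Rabs_mult. have Hg := Rabs_pos (f t).
    have : Rabs (f t) * Rabs (qg - b) <= Rabs (f t) * (eps / 3 / (Rabs (f t) + 1)) by apply: Rmult_le_compat_l; lra.
    have : Rabs (f t) * (eps / 3 / (Rabs (f t) + 1)) <= eps / 3.
      apply: (Rmult_le_reg_r (Rabs (f t) + 1)); first lra. field_simplify; nra.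
    lra.
  have T3 : Rabs (qf * (g s - g t)) < eps / 3.
    rewrite Rabs_mult.
    have Hqf : Rabs qf <= K by rewrite /K; have := Rabs_triang_inv qf a; clear -A1; lra.
    have Hb := Rabs_pos b. have Hst2 := Rabs_pos (s - t).
    have B1 : Rabs (g s - g t) <= (Rabs b + 1) * e3.
      apply: (Rle_trans _ _ _ A3); apply: Rmult_le_compat_l; lra.
    have : Rabs qf * Rabs (g s - g t) <= K * ((Rabs b + 1) * e3).
      apply: Rmult_le_compat; try apply: Rabs_pos; lra.
    have : K * ((Rabs b + 1) * e3) = eps / 3 by rewrite /e3; field; lra.
    have : Rabs (g s - g t) < (Rabs b + 1) * e3 \/ Rabs (g s - g t) <= (Rabs b + 1) * e3 by right; lra.
    move=> _ E1 H0.
    have Hlt : (Rabs b + 1) * Rabs (s - t) < (Rabs b + 1) * e3 by apply: Rmult_lt_compat_l; lra.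
    have B2 : Rabs (g s - g t) < (Rabs b + 1) * e3 by lra.
    have Hqf0 := Rabs_pos qf.
    have : Rabs qf * Rabs (g s - g t) <= K * Rabs (g s - g t) by apply: Rmult_le_compat_r; [apply: Rabs_pos|lra].
    have : K * Rabs (g s - g t) < K * ((Rabs b + 1) * e3) by apply: Rmult_lt_compat_l.
    lra.
  have := Rabs_triang ((qf - a) * g t + f t * (qg - b)) (qf * (g s - g t)).
  have := Rabs_triang ((qf - a) * g t) (f t * (qg - b)).
  lra.
Qed.

Definition clampab (a b s : R) := Rmax a (Rmin b s).

Lemma clampab_in a b s : a <= b -> a <= clampab a b s <= b.
Proof. rewrite /clampab => H; split; [apply: Rmax_l | apply: Rmax_lub => //; apply: Rmin_l]. Qed.
Lemma clampab_id a b s : a <= s <= b -> clampab a b s = s.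
Proof. rewrite /clampab => H; rewrite Rmin_right ?Rmax_right; lra. Qed.
Lemma clampab_lip a b s c : a <= b -> a <= c <= b -> Rabs (clampab a b s - c) <= Rabs (s - c).
Proof.
  rewrite /clampab => H H'.
  case: (Rle_dec s b) => Hsb.
  - rewrite Rmin_right //. case: (Rle_dec a s) => Has; [rewrite Rmax_right // | rewrite Rmax_left; [|lra]]; try apply: Rle_refl; split_Rabs; lra.
  - rewrite Rmin_left; [|lra]. rewrite Rmax_right //. split_Rabs; lra.
Qed.

Lemma MVTI (I : R -> Prop) f d a b :
  is_interval I -> I a -> I b -> a <= b -> (forall t, I t -> deriv_in I f t (d t)) ->
  exists c, a <= c <= b /\ f b - f a = d c * (b - a).
Proof.
  move=> HI Ia Ib Hab Hd.
  case: (Req_dec a b) => [<-|Hab']; first by exists a; split; [lra|ring].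
  have Hab2 : a < b by lra.
  set phi := fun s => f (clampab a b s).
  have Hsub : forall s, a <= s <= b -> I s by move=> s Hs; apply: (HI a s b) => //; lra.
  have D1 : forall x, Rmin a b < x < Rmax a b -> is_derive phi x (d x).
    move=> x; rewrite Rmin_left ?Rmax_right; try lra; move=> Hx.
    apply/is_derive_Reals.
    have Ix : I x by apply: Hsub; lra.
    apply: (@deriv_in_derivable I f phi x (d x) (Hd x Ix)).
    + exists (Rmin (x - a) (b - x)); split; first by apply: Rmin_glb_lt; lra.
      move=> s Hs; have := Rmin_l (x - a) (b - x); have := Rmin_r (x - a) (b - x).
      move=> ? ?; have Hs' : a <= s <= b by split_Rabs; lra.
      split; [by apply: Hsub | by rewrite /phi clampab_id].
    + rewrite /phi clampab_id //; lra.
  have D2 : forall x, Rmin a b <= x <= Rmax a b -> continuity_pt phi x.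
    move=> x; rewrite Rmin_left ?Rmax_right; try lra; move=> Hx.
    have [dd [Hdd Hdd']] := deriv_in_cont (Hd x (Hsub x Hx)).
    apply: (proj2 (continuity_pt_filterlim _ _)); apply/filterlim_locally => eps.
    set K := Rabs (d x) + 1.
    have HK : 0 < K by rewrite /K; have := Rabs_pos (d x); lra.
    have He2 : 0 < Rmin dd (eps / K).
      apply: Rmin_glb_lt => //; apply: Rdiv_lt_0_compat => //; apply: cond_pos.
    exists (mkposreal _ He2) => y Hy.
    have Hy' : Rabs (y - x) < Rmin dd (eps / K) by apply: Hy.
    have Hcl := clampab_lip y (Rlt_le _ _ Hab2) Hx.
    have Hin := clampab_in y (Rlt_le _ _ Hab2).
    have Hc0 : Rabs (clampab a b y - x) < dd by have := Rmin_l dd (eps / K); lra.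
    have H1 := Hdd' _ (Hsub _ Hin) Hc0.
    have H2 : Rabs (clampab a b y - x) < eps / K by have := Rmin_r dd (eps / K); lra.
    have H3 := Rmult_lt_compat_l K _ _ HK H2.
    have E : K * (eps / K) = eps by field; lra.
    rewrite E in H3.
    change (Rabs (phi y - phi x) < eps).
    rewrite /phi (clampab_id (s := x)) //. rewrite /K in H1 H3. lra.
  have [c [Hc Hc']] := MVT_gen phi a b d D1 D2.
  rewrite Rmin_left ?Rmax_right in Hc; try lra.
  exists c; split => //. move: Hc'; rewrite /phi !clampab_id //; lra.
Qed.

Lemma nonincr_I (I : R -> Prop) f d a b :
  is_interval I -> I a -> I b -> a <= b -> (forall t, I t -> deriv_in I f t (d t)) ->
  (forall t, I t -> d t <= 0) -> f b <= f a.
Proof.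
  move=> HI Ia Ib Hab Hd Hneg.
  have [c [Hc E]] := @MVTI I f d a b HI Ia Ib Hab Hd.
  have Ic : I c by apply: (HI a c b) => //; lra.
  have := Hneg c Ic. nra.
Qed.

Lemma lip_I (I : R -> Prop) f d a b L :
  is_interval I -> I a -> I b -> (forall t, I t -> deriv_in I f t (d t)) ->
  (forall t, I t -> Rabs (d t) <= L) -> Rabs (f b - f a) <= L * Rabs (b - a).
Proof.
  move=> HI Ia Ib Hd HL.
  wlog Hab : a b Ia Ib / a <= b.
    move=> W; case: (Rle_dec a b) => H; first by apply: W.
    rewrite -Rabs_Ropp -(Rabs_Ropp (b - a)).
    have -> : - (f b - f a) = f a - f b by ring.
    have -> : - (b - a) = a - b by ring.
    apply: W => //; lra.
  have [c [Hc E]] := @MVTI I f d a b HI Ia Ib Hab Hd.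
  have Ic : I c by apply: (HI a c b) => //; lra.
  rewrite E Rabs_mult. apply: Rmult_le_compat_r; [apply: Rabs_pos | by apply: HL].
Qed.

Lemma CR n (U : Rn n -> Prop) (f : Rn n -> R) (g : 'I_n -> Rn n -> R) (x : R -> Rn n) (v : 'I_n -> R) I t :
  is_open U -> (forall j y, U y -> partial f j y (g j y)) -> (forall j, cont_on U (g j)) -> U (x t) ->
  (forall j, deriv_in I (fun s => x s j) t (v j)) ->
  deriv_in I (fun s => f (x s)) t (rsum (fun j => g j (x t) * v j)).
Proof.
  move=> HU Hf Hg Hx Hv eps He.
  set z := x t.
  set A := rsum (fun j => Rabs (g j z)).
  set B := rsum (fun j => Rabs (v j)).
  set N := INR n.
  have HA : 0 <= A by apply: rsum_nonneg => j; apply: Rabs_pos.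
  have HB : 0 <= B by apply: rsum_nonneg => j; apply: Rabs_pos.
  have HN : 0 <= N by apply: pos_INR.
  set e1 := eps / (2 * (B + N + 1)).
  have He1 : 0 < e1 by rewrite /e1; apply: Rdiv_lt_0_compat; lra.
  set eta := Rmin 1 (eps / (2 * (A + 1))).
  have Heta : 0 < eta by rewrite /eta; apply: Rmin_glb_lt; [lra | apply: Rdiv_lt_0_compat; lra].
  have Heta1 : eta <= 1 by apply: Rmin_l.
  have Heta2 : A * eta < eps / 2.
    have : eta <= eps / (2 * (A + 1)) by apply: Rmin_r.
    move=> H1; have : A * eta <= A * (eps / (2 * (A + 1))) by apply: Rmult_le_compat_l.
    have : A * (eps / (2 * (A + 1))) < eps / 2.
      apply: (Rmult_lt_reg_r (2 * (A + 1))); first lra. field_simplify; lra.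
    lra.
  have [r [Hr [HrU Hsd]]] := @SD n U f g z HU Hf Hg Hx e1 He1.
  have [d [Hd Hdj]] := @fin_min n (fun j d => forall s, I s -> s <> t -> Rabs (s - t) < d ->
      Rabs ((x s j - x t j) / (s - t) - v j) < eta /\ Rabs (x s j - x t j) < r)
    ltac:(move=> j d d' Hd' H s Is Hst Hs; apply: H => //; lra)
    ltac:(move=> j; have [d1 [Hd1 H1]] := Hv j eta Heta;
          have [d2 [Hd2 H2]] := deriv_in_cont (Hv j);
          have Hvj := Rabs_pos (v j);
          exists (Rmin d1 (Rmin d2 (r / (Rabs (v j) + 1)))); split;
          [ repeat apply: Rmin_glb_lt => //; apply: Rdiv_lt_0_compat; lra
          | move=> s Is Hst Hs;
            have := Rmin_l d1 (Rmin d2 (r / (Rabs (v j) + 1)));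
            have := Rmin_r d1 (Rmin d2 (r / (Rabs (v j) + 1)));
            have := Rmin_l d2 (r / (Rabs (v j) + 1));
            have := Rmin_r d2 (r / (Rabs (v j) + 1)); move=> ? ? ? ?;
            split; [ apply: H1 => //; lra
                   | have := H2 s Is ltac:(lra); move=> H3;
                     have : (Rabs (v j) + 1) * Rabs (s - t) < (Rabs (v j) + 1) * (r / (Rabs (v j) + 1));
                     [ apply: Rmult_lt_compat_l; lra
                     | have -> : (Rabs (v j) + 1) * (r / (Rabs (v j) + 1)) = r by field; lra ];
                     lra ] ]).
  exists d; split => // s Is Hst Hs.
  have Hst' : s - t <> 0 by lra.
  set q := fun j => (x s j - x t j) / (s - t).
  have Hq : forall j, Rabs (q j - v j) < eta by move=> j; case: (Hdj j s Is Hst Hs).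
  have Hbx : box z r (x s) by move=> j; case: (Hdj j s Is Hst Hs).
  have Hbz : box z r z by move=> j; rewrite Rminus_diag Rabs_R0.
  have E := Hsd z (x s) Hbz Hbx.
  have Ex : forall j, x s j - z j = q j * (s - t) by move=> j; rewrite /q /z; field.
  have E1 : rsum (fun j => g j z * (x s j - z j)) = (s - t) * rsum (fun j => g j z * q j).
    rewrite -rsum_scal; apply: rsum_ext => j; rewrite Ex; ring.
  have E2 : asum (vsub (x s) z) <= (B + N) * Rabs (s - t).
    rewrite /asum /vsub.
    have -> : rsum (fun j => Rabs (x s j - z j)) = rsum (fun j => Rabs (q j) * Rabs (s - t)).
      apply: rsum_ext => j; by rewrite Ex Rabs_mult.
    rewrite (@rsum_ext n _ (fun j => Rabs (s - t) * Rabs (q j))); last by move=> j; ring.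
    rewrite rsum_scal Rmult_comm; apply: Rmult_le_compat_r; first apply: Rabs_pos.
    rewrite /B /N.
    have : rsum (fun j => Rabs (q j)) <= rsum (fun j => Rabs (v j) + 1).
      apply: rsum_le => j; have := Hq j; have := Rabs_triang_inv (q j) (v j); lra.
    rewrite rsum_plus.
    have : rsum (fun j : 'I_n => 1) <= INR n * 1 by apply: rsum_const_le => j; lra.
    lra.
  rewrite E1 in E.
  set Sq := rsum (fun j => g j z * q j) in E.
  set Sv := rsum (fun j => g j z * v j).
  have E3 : Rabs (Sq - Sv) <= A * eta.
    rewrite /Sq /Sv -rsum_minus.
    apply: Rle_trans; first apply: rsum_abs.
    have -> : A * eta = rsum (fun j => eta * Rabs (g j z)) by rewrite rsum_scal /A; ring.
    apply: rsum_le => j.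
    have -> : g j z * q j - g j z * v j = g j z * (q j - v j) by ring.
    rewrite Rabs_mult Rmult_comm. apply: Rmult_le_compat_r; first apply: Rabs_pos.
    have := Hq j; lra.
  have Hrat : (f (x s) - f z) / (s - t) - Sv = (Sq - Sv) + (f (x s) - f z - (s - t) * Sq) / (s - t)
    by field.
  rewrite Hrat.
  have Hst0 : 0 < Rabs (s - t) by apply: Rabs_pos_lt.
  have E4 : Rabs ((f (x s) - f z - (s - t) * Sq) / (s - t)) <= e1 * (B + N).
    rewrite /Rdiv Rabs_mult Rabs_inv.
    apply: (Rmult_le_reg_r (Rabs (s - t))) => //.
    rewrite Rmult_assoc Rinv_l; last lra.
    have := Rmult_le_compat_l e1 _ _ (Rlt_le _ _ He1) E2. lra.
  have E5 : e1 * (B + N) < eps / 2.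
    rewrite /e1. apply: (Rmult_lt_reg_r (2 * (B + N + 1))); first lra. field_simplify; lra.
  have := Rabs_triang (Sq - Sv) ((f (x s) - f z - (s - t) * Sq) / (s - t)). lra.
Qed.

Lemma cont_on_ext n (U : Rn n -> Prop) f g : (forall x, U x -> f x = g x) -> cont_on U f -> cont_on U g.
Proof.
  move=> E H x Ux eps He; have [d [Hd H']] := H x Ux eps He; exists d; split => // y Uy Hy.
  rewrite -!E //; by apply: H'.
Qed.

Lemma cont_on_const n (U : Rn n -> Prop) c : cont_on U (fun _ => c).
Proof. move=> x Ux eps He; exists 1; split; [lra|] => y _ _; rewrite Rminus_diag Rabs_R0; lra. Qed.

Lemma cont_on_plus n (U : Rn n -> Prop) f g : cont_on U f -> cont_on U g -> cont_on U (fun x => f x + g x).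
Proof.
  move=> Hf Hg x Ux eps He.
  have [d1 [Hd1 H1]] := Hf x Ux (eps/2) ltac:(lra); have [d2 [Hd2 H2]] := Hg x Ux (eps/2) ltac:(lra).
  exists (Rmin d1 d2); split; first by apply: Rmin_glb_lt.
  move=> y Uy Hy.
  have := H1 y Uy ltac:(have := Rmin_l d1 d2; lra); have := H2 y Uy ltac:(have := Rmin_r d1 d2; lra).
  move=> A B; have := Rabs_triang (f y - f x) (g y - g x).
  have -> : f y + g y - (f x + g x) = (f y - f x) + (g y - g x) by ring. lra.
Qed.

Lemma cont_on_mult n (U : Rn n -> Prop) f g : cont_on U f -> cont_on U g -> cont_on U (fun x => f x * g x).
Proof.
  move=> Hf Hg x Ux eps He.
  have Hgx := Rabs_pos (g x); have Hfx := Rabs_pos (f x).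
  set ef := Rmin 1 (eps / (2 * (Rabs (g x) + 2))).
  set eg := Rmin 1 (eps / (2 * (Rabs (f x) + 1))).
  have Hef : 0 < ef by apply: Rmin_glb_lt; [lra | apply: Rdiv_lt_0_compat; lra].
  have Heg : 0 < eg by apply: Rmin_glb_lt; [lra | apply: Rdiv_lt_0_compat; lra].
  have [d1 [Hd1 H1]] := Hf x Ux ef Hef; have [d2 [Hd2 H2]] := Hg x Ux eg Heg.
  exists (Rmin d1 d2); split; first by apply: Rmin_glb_lt.
  move=> y Uy Hy.
  have A := H1 y Uy ltac:(have := Rmin_l d1 d2; lra); have B := H2 y Uy ltac:(have := Rmin_r d1 d2; lra).
  have -> : f y * g y - f x * g x = (f y - f x) * g y + f x * (g y - g x) by ring.
  have Hgy : Rabs (g y) <= Rabs (g x) + 1.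
    have := Rabs_triang_inv (g y) (g x); have := Rmin_l 1 (eps / (2 * (Rabs (f x) + 1))); rewrite -/eg; lra.
  have T1 : Rabs ((f y - f x) * g y) < eps / 2.
    rewrite Rabs_mult.
    have : Rabs (f y - f x) * Rabs (g y) <= ef * (Rabs (g x) + 1).
      apply: Rmult_le_compat; try apply: Rabs_pos; lra.
    have : ef * (Rabs (g x) + 1) <= eps / (2 * (Rabs (g x) + 2)) * (Rabs (g x) + 1).
      apply: Rmult_le_compat_r; [lra | apply: Rmin_r].
    have : eps / (2 * (Rabs (g x) + 2)) * (Rabs (g x) + 1) < eps / 2.
      apply: (Rmult_lt_reg_r (2 * (Rabs (g x) + 2))); first lra. field_simplify; nra.
    lra.
  have T2 : Rabs (f x * (g y - g x)) < eps / 2.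
    rewrite Rabs_mult.
    have : Rabs (f x) * Rabs (g y - g x) <= Rabs (f x) * eg by apply: Rmult_le_compat_l; lra.
    have : Rabs (f x) * eg <= Rabs (f x) * (eps / (2 * (Rabs (f x) + 1))) by apply: Rmult_le_compat_l; [lra | apply: Rmin_r].
    have : Rabs (f x) * (eps / (2 * (Rabs (f x) + 1))) < eps / 2.
      apply: (Rmult_lt_reg_r (2 * (Rabs (f x) + 1))); first lra. field_simplify; nra.
    lra.
  have := Rabs_triang ((f y - f x) * g y) (f x * (g y - g x)). lra.
Qed.

Lemma partial_ext n (U : Rn n -> Prop) f g i x l : is_open U -> (forall y, U y -> f y = g y) -> U x ->
  partial f i x l -> partial g i x l.
Proof.
  move=> HU E Ux H eps He; have [d Hd] := H eps He.
  have [r [Hr Hb]] := open_box x HU Ux.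
  have Hm : 0 < Rmin d r by apply: Rmin_glb_lt => //; apply: cond_pos.
  exists (mkposreal _ Hm) => h Hh Hh'; simpl in Hh'.
  have U1 : forall s, Rabs (s - x i) < r -> U (upd x i s).
    move=> s Hs; apply: Hb => j; rewrite /upd; case: eqP => [->|_] //; rewrite Rminus_diag Rabs_R0 //.
  rewrite -!E; try apply: U1.
  - apply: Hd => //; have := Rmin_l d r; lra.
  - rewrite Rminus_diag Rabs_R0 //.
  - have -> : x i + h - x i = h by ring. have := Rmin_r d r; lra.
Qed.

Lemma partial_unique n (f : Rn n -> R) i x l1 l2 : partial f i x l1 -> partial f i x l2 -> l1 = l2.
Proof. apply: uniqueness_limite. Qed.

Lemma Ck_cont n (U : Rn n -> Prop) k f : Ck U k f -> cont_on U f.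
Proof. by case: k => [|k] //= [] . Qed.

Lemma Ck_ext n (U : Rn n -> Prop) k : is_open U -> forall f g, (forall x, U x -> f x = g x) -> Ck U k f -> Ck U k g.
Proof.
  move=> HU; elim: k => [|k IH] f g E /=; first by apply: cont_on_ext.
  move=> [Hc Hp]; split; first by apply: (@cont_on_ext n U f g E Hc).
  move=> i; have [h [Hh1 Hh2]] := Hp i; exists h; split => // x Ux.
  apply: (@partial_ext n U f g i x (h x) HU E Ux); by apply: Hh1.
Qed.

Lemma Ck_S n (U : Rn n -> Prop) k f : Ck U (S k) f -> Ck U k f.
Proof.
  elim: k f => [|k IH] f /=; first by case.
  move=> [Hc Hp]; split => // i; have [h [Hh1 Hh2]] := Hp i; exists h; split => //; by apply: IH.
Qed.

Lemma Ck_const n (U : Rn n -> Prop) k c : Ck U k (fun _ => c).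
Proof.
  elim: k c => [|k IH] c /=; first by apply: cont_on_const.
  split; first by apply: cont_on_const.
  move=> i; exists (fun _ => 0); split; last by apply: IH.
  move=> x _; rewrite /partial; apply: derivable_pt_lim_const.
Qed.

Lemma Ck_plus n (U : Rn n -> Prop) k : forall f g, Ck U k f -> Ck U k g -> Ck U k (fun x => f x + g x).
Proof.
  elim: k => [|k IH] f g /=; first by apply: cont_on_plus.
  move=> [Hfc Hfp] [Hgc Hgp]; split; first by apply: cont_on_plus.
  move=> i; have [f' [Hf1 Hf2]] := Hfp i; have [g' [Hg1 Hg2]] := Hgp i.
  exists (fun x => f' x + g' x); split; last by apply: IH.
  move=> x Ux; rewrite /partial; apply: (derivable_pt_lim_plus (fun t => f (upd x i t)) (fun t => g (upd x i t))).
  - by apply: Hf1. - by apply: Hg1.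
Qed.

Lemma Ck_mult n (U : Rn n -> Prop) k : forall f g, Ck U k f -> Ck U k g -> Ck U k (fun x => f x * g x).
Proof.
  elim: k => [|k IH] f g /=; first by apply: cont_on_mult.
  move=> [Hfc Hfp] [Hgc Hgp]; split; first by apply: cont_on_mult.
  move=> i; have [f' [Hf1 Hf2]] := Hfp i; have [g' [Hg1 Hg2]] := Hgp i.
  exists (fun x => f' x * g x + f x * g' x); split.
  - move=> x Ux; rewrite /partial.
    have := derivable_pt_lim_mult (fun t => f (upd x i t)) (fun t => g (upd x i t)) (x i) _ _ (Hf1 x Ux) (Hg1 x Ux).
    by rewrite /= upd_same.
  - have Ef : Ck U k f by apply: (@Ck_S n U k f); split.
    have Eg : Ck U k g by apply: (@Ck_S n U k g); split.
    apply: Ck_plus; apply: IH => //.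
Qed.

Lemma Ck_lsum n (U : Rn n -> Prop) k (l : seq 'I_n) (F : 'I_n -> Rn n -> R) :
  (forall j, Ck U k (F j)) -> Ck U k (fun x => lsum l (fun j => F j x)).
Proof.
  move=> H; elim: l => [|a l IH] /=; first by apply: Ck_const.
  by apply: Ck_plus.
Qed.

Lemma smooth_ext n (U : Rn n -> Prop) f g : is_open U -> (forall x, U x -> f x = g x) -> smooth U f -> smooth U g.
Proof. move=> HU E H k; apply: (@Ck_ext n U k HU f g E); apply: H. Qed.

Lemma smooth_partial n (U : Rn n -> Prop) f i p : is_open U -> smooth U f ->
  (forall x, U x -> partial f i x (p x)) -> smooth U p.
Proof.
  move=> HU Hf Hp k; have [_ H] := Hf (S k); have [g [Hg1 Hg2]] := H i.
  apply: (@Ck_ext n U k HU g p _ Hg2) => x Ux; apply: (partial_unique (Hg1 x Ux)); by apply: Hp.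
Qed.

Lemma smooth_grad n (U : Rn n -> Prop) f : is_open U -> smooth U f ->
  exists g : 'I_n -> Rn n -> R, (forall j x, U x -> partial f j x (g j x)) /\ forall j, smooth U (g j).
Proof.
  move=> HU Hf.
  have H : forall j, exists g : Rn n -> R, forall x, U x -> partial f j x (g x).
    move=> j; have [_ H] := Hf 1%nat; have [g [Hg _]] := H j; by exists g.
  exists (fun j => proj1_sig (constructive_indefinite_description _ (H j))).
  split.
  - move=> j x Ux; exact: (proj2_sig (constructive_indefinite_description _ (H j)) x Ux).
  - move=> j; apply: (@smooth_partial n U f j _ HU Hf); exact: (proj2_sig (constructive_indefinite_description _ (H j))).
Qed.

Lemma smooth_mult n (U : Rn n -> Prop) f g : smooth U f -> smooth U g -> smooth U (fun x => f x * g x).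
Proof. move=> Hf Hg k; apply: Ck_mult; [apply: Hf | apply: Hg]. Qed.
Lemma smooth_plus n (U : Rn n -> Prop) f g : smooth U f -> smooth U g -> smooth U (fun x => f x + g x).
Proof. move=> Hf Hg k; apply: Ck_plus; [apply: Hf | apply: Hg]. Qed.
Lemma smooth_const n (U : Rn n -> Prop) c : smooth U (fun _ : Rn n => c).
Proof. move=> k; apply: Ck_const. Qed.
Lemma smooth_rsum n (U : Rn n -> Prop) (F : 'I_n -> Rn n -> R) :
  (forall j, smooth U (F j)) -> smooth U (fun x => rsum (fun j => F j x)).
Proof. move=> H k; apply: Ck_lsum => j; apply: H. Qed.
Lemma smooth_cont n (U : Rn n -> Prop) f : smooth U f -> cont_on U f.
Proof. move=> H; apply: (H 0%nat). Qed.

Lemma lie_smooth n (U : Rn n -> Prop) (X : Rn n -> Rn n) k g h : is_open U ->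
  (forall i, smooth U (fun x => X x i)) -> smooth U g -> lie_iter U X k g h -> smooth U h.
Proof.
  move=> HU HX Hg H; elim: H Hg => [g0 Hg0 | k0 g0 h0 p Hl IH Hp Hg0] //.
  have Hh := IH Hg0.
  apply: smooth_rsum => j; apply: smooth_mult; first by apply: HX.
  apply: (@smooth_partial n U h0 j _ HU Hh); apply: Hp.
Qed.

Lemma box_open n (z : Rn n) rho : is_open (box z rho).
Proof.
  move=> y Hy.
  have [r [Hr Hj]] := @fin_min n (fun j r => r <= rho - Rabs (y j - z j))
    ltac:(move=> j r r' Hr' H; lra) ltac:(move=> j; exists (rho - Rabs (y j - z j)); split; [have := Hy j; lra | lra]).
  exists r; split => // w Hw j.
  have H1 := coord_le_enorm (vsub w y) j; change (vsub w y j) with (w j - y j) in H1.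
  have := Hj j; have := Rabs_triang (w j - y j) (y j - z j).
  have -> : w j - y j + (y j - z j) = w j - z j by ring.
  lra.
Qed.

Lemma unif n (K : Rn n -> Prop) (P : R -> Rn n -> Rn n -> Prop) :
  is_compact K -> (forall C C' a b, C <= C' -> P C a b -> P C' a b) ->
  (forall z, K z -> exists d C, 0 < d /\ forall a b, box z d a -> box z d b -> P C a b) ->
  exists r C, 0 < r /\ forall p, K p -> forall a b, box p r a -> box p r b -> P C a b.
Proof.
  move=> HK Hmono Hloc.
  pose J := {z : Rn n & {dc : R * R | K z /\ 0 < dc.1 /\ forall a b, box z dc.1 a -> box z dc.1 b -> P dc.2 a b}}.
  pose dJ := fun j : J => (proj1_sig (projT2 j)).1.
  pose CJ := fun j : J => (proj1_sig (projT2 j)).2.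
  pose O := fun j : J => box (projT1 j) (dJ j / 2).
  have [l Hl] := HK J O ltac:(move=> j; apply: box_open)
    ltac:(move=> x Kx; have [d [C [Hd HP]]] := Hloc x Kx;
          exists (existT _ x (exist _ (d, C) (conj Kx (conj Hd HP))));
          rewrite /O /dJ /= => j; rewrite Rminus_diag Rabs_R0; lra).
  have HdJ : forall j, 0 < dJ j by move=> j; rewrite /dJ; case: (proj2_sig (projT2 j)) => _ [].
  have Hgen : forall l', 0 < fold_right (fun j acc => Rmin acc (dJ j / 2)) 1 l' /\
      forall j, List.In j l' -> fold_right (fun j acc => Rmin acc (dJ j / 2)) 1 l' <= dJ j / 2 /\
         CJ j <= fold_right (fun j acc => Rmax acc (CJ j)) 0 l'.
    elim => [|j l' [IH1 IH2]] /=; first by split; [lra | done].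
    split; first by apply: Rmin_glb_lt => //; have := HdJ j; lra.
    move=> j' [<-|Hj'].
    - split; [apply: Rmin_r | apply: Rmax_r].
    - have [A B] := IH2 j' Hj'; split.
      + have := Rmin_l (fold_right (fun j0 acc => Rmin acc (dJ j0 / 2)) 1 l') (dJ j / 2); lra.
      + have := Rmax_l (fold_right (fun j0 acc => Rmax acc (CJ j0)) 0 l') (CJ j); lra.
  have [Hr Hr'] := Hgen l.
  set r := fold_right (fun j acc => Rmin acc (dJ j / 2)) 1 l in Hr Hr'.
  set C := fold_right (fun j acc => Rmax acc (CJ j)) 0 l in Hr Hr'.
  exists r, C; split => // p Kp a b Ha Hb.
  have [j [Hjl Hj]] := Hl p Kp.
  have [Hrj HCj] := Hr' j Hjl.
  apply: (Hmono (CJ j)) => //.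
  case: (proj2_sig (projT2 j)) => _ [_ HP]. apply: HP => i.
  - have := Ha i; have := Hj i; rewrite /O => H1 H2.
    have := Rabs_triang (a i - p i) (p i - projT1 j i).
    have -> : a i - p i + (p i - projT1 j i) = a i - projT1 j i by ring.
    rewrite /dJ in Hrj H1; lra.
  - have := Hb i; have := Hj i; rewrite /O => H1 H2.
    have := Rabs_triang (b i - p i) (p i - projT1 j i).
    have -> : b i - p i + (p i - projT1 j i) = b i - projT1 j i by ring.
    rewrite /dJ in Hrj H1; lra.
Qed.

Lemma cont_bounded n (U K : Rn n -> Prop) f : is_open U -> is_compact K -> (forall x, K x -> U x) ->
  cont_on U f -> exists B, forall x, K x -> Rabs (f x) <= B.
Proof.
  move=> HU HK HKU Hf.
  have [r [C [Hr H]]] := @unif n K (fun C a b => Rabs (f a) <= C) HK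
    ltac:(move=> C C' a b ? ?; lra)
    ltac:(move=> z Kz; have [d [Hd Hd']] := cont_box z HU Hf (HKU z Kz) Rlt_0_1;
          exists d, (Rabs (f z) + 1); split => // a b Ha _; have [_ H1] := Hd' a Ha;
          have := Rabs_triang_inv (f a) (f z); lra).
  exists C => x Kx; apply: (H x Kx x x) => j; rewrite Rminus_diag Rabs_R0 //.
Qed.

Lemma cluster n (K : Rn n -> Prop) (u : nat -> Rn n) : is_compact K -> (forall m, K (u m)) ->
  exists y, K y /\ forall d, 0 < d -> forall N, exists m, (N <= m)%nat /\ box y d (u m).
Proof.
  move=> HK Hu; apply: NNPP => Hno.
  have Hno' : forall y, K y -> exists d N, 0 < d /\ forall m, (N <= m)%nat -> ~ box y d (u m).
    move=> y Ky; apply: NNPP => H1; apply: Hno; exists y; split => // d Hd N.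
    apply: NNPP => H2; apply: H1; exists d, N; split => // m Hm Hb; apply: H2; exists m; split => //.
  pose J := {y : Rn n & {dN : R * nat | K y /\ 0 < dN.1 /\ forall m, (dN.2 <= m)%nat -> ~ box y dN.1 (u m)}}.
  pose O := fun j : J => box (projT1 j) (proj1_sig (projT2 j)).1.
  have [l Hl] := HK J O ltac:(move=> j; apply: box_open)
    ltac:(move=> x Kx; have [d [N [Hd HP]]] := Hno' x Kx;
          exists (existT _ x (exist _ (d, N) (conj Kx (conj Hd HP))));
          rewrite /O /= => j; rewrite Rminus_diag Rabs_R0; lra).
  have Hgen : forall (l' : list J) (j : J), List.In j l' -> ((proj1_sig (projT2 j)).2 <= fold_right (fun j acc => maxn acc (proj1_sig (projT2 j)).2) 0%nat l')%nat.
    elim => [|j l' IH] j'; first by case.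
    case => [<-|Hj']; first by apply: leq_maxr.
    apply: leq_trans (IH j' Hj') _; apply: leq_maxl.
  pose N := fold_right (fun j acc => maxn acc (proj1_sig (projT2 j)).2) 0%nat l.
  have HN := Hgen l.
  have [j [Hjl Hj]] := Hl (u N) (Hu N).
  case: (proj2_sig (projT2 j)) => _ [_ HP].
  by apply: (HP N (HN j Hjl)).
Qed.

Record Hyps n (U : Rn n -> Prop) (X : Rn n -> Rn n) (V : Rn n -> R) (gradV : 'I_n -> Rn n -> R) (c : R) : Prop := {
  hU : is_open U;
  hX : forall i, smooth U (fun x => X x i);
  hV : smooth U V;
  hgrad : forall i x, U x -> partial V i x (gradV i x);
  hA1a : forall x, U x -> 0 <= V x;
  hA1c : forall x, U x -> rsum (fun i => gradV i x * X x i) = 0;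
  hc : 0 < c;
  hA2 : is_compact (fun x => U x /\ 0 <= V x <= c);
  hA3 : forall x, Sset U X V x -> (U x /\ 0 <= V x <= c) -> V x = 0 }.

Definition FF n (X : Rn n -> Rn n) (gradV : 'I_n -> Rn n -> R) : Rn n -> Rn n :=
  fun x i => X x i - gradV i x.


Lemma grad_smooth n U X V gradV c (H : @Hyps n U X V gradV c) j : smooth U (gradV j).
Proof. apply: (@smooth_partial n U V j _ (hU H) (hV H)) => x Ux; by apply: (hgrad H). Qed.

Lemma grad_cont n U X V gradV c (H : @Hyps n U X V gradV c) j : cont_on U (gradV j).
Proof. apply: smooth_cont; exact: (grad_smooth H j). Qed.

Lemma FF_smooth n U X V gradV c (H : @Hyps n U X V gradV c) i : smooth U (fun x => FF X gradV x i).
Proof.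
  rewrite /FF. have -> : (fun x => X x i - gradV i x) = (fun x => X x i + (-1) * gradV i x).
    apply: functional_extensionality => x; ring.
  apply: smooth_plus; first by apply: (hX H).
  apply: smooth_mult; [apply: smooth_const | exact: (grad_smooth H i)].
Qed.

Lemma CR_sol n (U : Rn n -> Prop) (F : Rn n -> Rn n) f (g : 'I_n -> Rn n -> R) I x t :
  is_open U -> (forall j y, U y -> partial f j y (g j y)) -> (forall j, cont_on U (g j)) ->
  sol U F I x -> I t -> deriv_in I (fun s => f (x s)) t (rsum (fun j => g j (x t) * F (x t) j)).
Proof.
  move=> HU Hf Hg Hs It; have [Ux Hd] := Hs t It.
  exact: (@CR n U f g x (F (x t)) I t HU Hf Hg Ux Hd).
Qed.

Lemma dV_sol n U X V gradV c (H : @Hyps n U X V gradV c) I x t :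
  sol U (FF X gradV) I x -> I t ->
  deriv_in I (fun s => V (x s)) t (- rsum (fun j => gradV j (x t) ^ 2)).
Proof.
  move=> Hs It.
  have := @CR_sol n U _ V gradV I x t (hU H) (hgrad H) (grad_cont H) Hs It.
  have [Ux _] := Hs t It.
  have -> : rsum (fun j => gradV j (x t) * FF X gradV (x t) j) = - rsum (fun j => gradV j (x t) ^ 2).
    rewrite /FF.
    have -> : rsum (fun j => gradV j (x t) * (X (x t) j - gradV j (x t))) =
       rsum (fun j => gradV j (x t) * X (x t) j) - rsum (fun j => gradV j (x t) ^ 2).
      rewrite -rsum_minus; apply: rsum_ext => j; ring.
    rewrite (hA1c H) //; ring.
  done.
Qed.

Lemma dV_solX n U X V gradV c (H : @Hyps n U X V gradV c) I x t :
  sol U X I x -> I t -> deriv_in I (fun s => V (x s)) t 0.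
Proof.
  move=> Hs It.
  have := @CR_sol n U _ V gradV I x t (hU H) (hgrad H) (grad_cont H) Hs It.
  have [Ux _] := Hs t It.
  by rewrite (hA1c H).
Qed.

Lemma sq_sum_nonneg n (v : 'I_n -> R) : 0 <= rsum (fun j => v j ^ 2).
Proof. apply: rsum_nonneg => j; apply: pow2_ge_0. Qed.

Lemma V_nonincr n U X V gradV c (H : @Hyps n U X V gradV c) I x a b :
  is_interval I -> sol U (FF X gradV) I x -> I a -> I b -> a <= b -> V (x b) <= V (x a).
Proof.
  move=> HI Hs Ia Ib Hab.
  apply: (@nonincr_I I (fun s => V (x s)) (fun t => - rsum (fun j => gradV j (x t) ^ 2)) a b HI Ia Ib Hab).
  - move=> t It; exact: (@dV_sol _ _ _ _ _ _ H I x t Hs It).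
  - move=> t It; have := sq_sum_nonneg (fun j => gradV j (x t)); lra.
Qed.

Lemma claim2 n U X V gradV c (H : @Hyps n U X V gradV c) I x :
  is_interval I -> I 0 -> (forall t, I t -> 0 <= t) -> sol U (FF X gradV) I x ->
  (U (x 0) /\ 0 <= V (x 0) <= c) -> forall t, I t -> U (x t) /\ 0 <= V (x t) <= c.
Proof.
  move=> HI I0 Hpos Hs [U0 [V0 Vc]] t It.
  have [Ut _] := Hs t It.
  have := @V_nonincr _ _ _ _ _ _ H I x 0 t HI Hs I0 It (Hpos t It).
  have := hA1a H (x t) Ut. move=> ? ?; split => //; lra.
Qed.

Lemma claim4 n U X V gradV c (H : @Hyps n U X V gradV c) :
  invariant_set U X (fun x => U x /\ V x = 0).
Proof.
  move=> I x HI I0 Hs [U0 V0] t It.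
  have [Ut _] := Hs t It; split => //.
  have := @lip_I I (fun s => V (x s)) (fun _ => 0) 0 t 0 HI I0 It
    ltac:(move=> s Is; exact: (@dV_solX _ _ _ _ _ _ H I x s Hs Is)) ltac:(move=> s _; rewrite Rabs_R0; lra).
  rewrite V0 Rmult_0_l => H1; have := Rabs_pos (V (x t) - 0); split_Rabs; lra.
Qed.

Lemma pow_small q : 0 <= q <= 1/2 -> forall e, 0 < e -> exists N, forall m, (N <= m)%nat -> q ^ m < e.
Proof.
  move=> Hq e He.
  have [N HN] := pow_lt_1_zero q ltac:(rewrite Rabs_pos_eq; lra) e He.
  exists N => m Hm; have := HN m ltac:(apply/leP; done).
  rewrite Rabs_pos_eq //; apply: pow_le; lra.
Qed.

Lemma lim_le A B C q : 0 <= q <= 1/2 -> 0 <= C -> (forall m, A <= B + C * q ^ m) -> A <= B.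
Proof.
  move=> Hq HC H; apply: Rnot_lt_le => Hlt.
  have He : 0 < (A - B) / (C + 1) by apply: Rdiv_lt_0_compat; lra.
  have [N HN] := pow_small Hq He.
  have := HN N (leqnn N); have := H N.
  have Hp : 0 <= q ^ N by apply: pow_le; lra.
  move=> H1 H2.
  have : C * q ^ N <= C * ((A - B) / (C + 1)) by apply: Rmult_le_compat_l; lra.
  have : C * ((A - B) / (C + 1)) < A - B.
    apply: (Rmult_lt_reg_r (C + 1)); first lra. field_simplify; nra.
  lra.
Qed.

Lemma GEO (u : nat -> R) a q : 0 <= q <= 1/2 -> 0 <= a -> (forall m, Rabs (u (S m) - u m) <= a * q ^ m) ->
  {l : R | forall m, Rabs (l - u m) <= 2 * a * q ^ m}.
Proof.
  move=> Hq Ha H.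
  have Hk : forall m j, Rabs (u (m + j)%nat - u m) <= 2 * a * q ^ m - 2 * a * q ^ (m + j).
    move=> m; elim => [|j IH]; first by rewrite addn0 Rminus_diag Rabs_R0; lra.
    have -> : (m + j.+1)%nat = S (m + j) by rewrite addnS.
    have := H (m + j)%nat.
    have := Rabs_triang (u (S (m + j)) - u (m + j)%nat) (u (m + j)%nat - u m).
    have -> : u (S (m + j)) - u (m + j)%nat + (u (m + j)%nat - u m) = u (S (m + j)) - u m by ring.
    have E : q ^ (S (m + j)) = q * q ^ (m + j) by [].
    have Hp : 0 <= q ^ (m + j) by apply: pow_le; lra.
    rewrite E. move=> A B.
    have Haq : 0 <= a * q ^ (m + j) by apply: Rmult_le_pos.
    have : a * q ^ (m + j) * (1 - 2 * q) >= 0 by apply: Rle_ge; apply: Rmult_le_pos; lra.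
    nra.
  have Hk' : forall m k, (m <= k)%nat -> Rabs (u k - u m) <= 2 * a * q ^ m.
    move=> m k Hmk; have := Hk m (k - m)%nat; rewrite subnKC //.
    have : 0 <= q ^ k by apply: pow_le; lra. nra.
  have Hc : Cauchy_crit u.
    move=> eps He.
    have He' : 0 < eps / (4 * a + 1) by apply: Rdiv_lt_0_compat; lra.
    have [N HN] := pow_small Hq He'.
    exists N => m k Hm Hk2; rewrite /R_dist.
    have Hm' : (N <= m)%nat by apply/leP.
    have Hk2' : (N <= k)%nat by apply/leP.
    have A1 := Hk' N m Hm'. have A2 := Hk' N k Hk2'.
    have B : 4 * a * q ^ N < eps.
      have := HN N (leqnn N) => H1.
      have : 4 * a * q ^ N <= 4 * a * (eps / (4 * a + 1)) by apply: Rmult_le_compat_l; lra.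
      have : 4 * a * (eps / (4 * a + 1)) < eps.
        apply: (Rmult_lt_reg_r (4 * a + 1)); first lra. field_simplify; nra.
      lra.
    have := Rabs_triang (u m - u N) (u N - u k).
    have -> : u m - u N + (u N - u k) = u m - u k by ring.
    rewrite (Rabs_minus_sym (u N)). lra.
  have [l Hl] := Rcomplete.R_complete u Hc.
  exists l => m.
  apply: le_epsilon => e He.
  have [N HN] := Hl e He.
  set k := maxn N m.
  have := HN k ltac:(apply/leP; apply: leq_maxl).
  have := Hk' m k (leq_maxr N m).
  rewrite /R_dist => A1 A2.
  have := Rabs_triang (l - u k) (u k - u m).
  have -> : l - u k + (u k - u m) = l - u m by ring.
  rewrite Rabs_minus_sym in A2. lra.
Qed.

Lemma ex_all (g : R -> R) : (forall u, continuous g u) -> forall a b, ex_RInt g a b.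
Proof. move=> H a b; apply: ex_RInt_continuous => z _; apply: H. Qed.

Lemma RInt_bound (g : R -> R) M a b : (forall u, continuous g u) -> (forall u, Rabs (g u) <= M) ->
  Rabs (RInt g a b) <= M * Rabs (b - a).
Proof.
  move=> Hc HM.
  case: (Rle_dec a b) => Hab.
  - rewrite (Rabs_pos_eq (b - a)); last lra. rewrite Rmult_comm.
    apply: abs_RInt_le_const; [lra | by apply: ex_all | move=> t _; apply: HM].
  - rewrite -(opp_RInt_swap _ _ _ (ex_all Hc b a)). rewrite /opp /= Rabs_Ropp.
    have -> : Rabs (b - a) = a - b by rewrite Rabs_left; lra.
    rewrite Rmult_comm. apply: abs_RInt_le_const; [lra | by apply: ex_all | move=> t _; apply: HM].
Qed.

Lemma RInt_diff (g : R -> R) a b : (forall u, continuous g u) -> RInt g 0 b - RInt g 0 a = RInt g a b.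
Proof.
  move=> Hc; rewrite -(RInt_Chasles g 0 a b); try apply: ex_all => //.
  rewrite /plus /=; ring.
Qed.

Lemma RInt_sub (g1 g2 : R -> R) a b : (forall u, continuous g1 u) -> (forall u, continuous g2 u) ->
  RInt (fun u => g1 u - g2 u) a b = RInt g1 a b - RInt g2 a b.
Proof.
  move=> H1 H2. have := RInt_minus g1 g2 a b (ex_all H1 a b) (ex_all H2 a b).
  rewrite /minus /plus /opp /=. done.
Qed.

Lemma cont_comp n (U : Rn n -> Prop) f (y : R -> Rn n) M : cont_on U f -> (forall u, U (y u)) -> 0 <= M ->
  (forall u u' j, Rabs (y u j - y u' j) <= M * Rabs (u - u')) -> forall u, continuous (fun s => f (y s)) u.
Proof.
  move=> Hf HU HM Hy u.
  apply/filterlim_locally => eps.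
  have [d [Hd Hd']] := Hf (y u) (HU u) eps (cond_pos eps).
  have HN := pos_INR n.
  have HK : 0 < INR n * M + 1 by nra.
  have He2 : 0 < d / (INR n * M + 1) by apply: Rdiv_lt_0_compat.
  exists (mkposreal _ He2) => s Hs.
  have Hs' : Rabs (s - u) < d / (INR n * M + 1) by apply: Hs.
  change (Rabs (f (y s) - f (y u)) < eps).
  apply: Hd' => //.
  have := enorm_le_asum (vsub (y s) (y u)).
  have : asum (vsub (y s) (y u)) <= INR n * (M * Rabs (s - u)).
    apply: rsum_const_le => j; rewrite /vsub; apply: Hy.
  have : (INR n * M + 1) * Rabs (s - u) < d.
    have := Rmult_lt_compat_l _ _ _ HK Hs'.
    have -> : (INR n * M + 1) * (d / (INR n * M + 1)) = d by field; lra. done.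
  have := Rabs_pos (s - u). nra.
Qed.

Fixpoint pic n (F : Rn n -> Rn n) (p : Rn n) (h : R) (m : nat) : R -> Rn n :=
  match m with
  | O => fun _ => p
  | S m' => fun s i => p i + RInt (fun u => F (pic F p h m' u) i) 0 (clampab 0 h s)
  end.

Lemma clampab_lip2 a b s s' : a <= b -> Rabs (clampab a b s - clampab a b s') <= Rabs (s - s').
Proof.
  rewrite /clampab => Hab.
  have H1 : forall x y, Rabs (Rmin b x - Rmin b y) <= Rabs (x - y).
    move=> x y; rewrite /Rmin; repeat case: Rle_dec => ? ; split_Rabs; lra.
  have H2 : forall x y, Rabs (Rmax a x - Rmax a y) <= Rabs (x - y).
    move=> x y; rewrite /Rmax; repeat case: Rle_dec => ? ; split_Rabs; lra.
  apply: Rle_trans (H2 _ _) (H1 _ _).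
Qed.

Lemma asum_le_n n (v : Rn n) B : (forall j, Rabs (v j) <= B) -> asum v <= INR n * B.
Proof. move=> H; by apply: rsum_const_le. Qed.

Lemma picard n (U : Rn n -> Prop) (F : Rn n -> Rn n) p r L M h :
  0 < r -> 0 <= L -> 0 <= M -> 0 < h -> M * h <= r / 2 -> INR n * L * h <= 1 / 2 ->
  (forall a, box p r a -> U a) ->
  (forall i, cont_on U (fun x => F x i)) ->
  (forall a b i, box p r a -> box p r b -> Rabs (F b i - F a i) <= L * asum (vsub b a)) ->
  (forall a i, box p r a -> Rabs (F a i) <= M) ->
  exists y, y 0 = p /\ sol U F (fun s => 0 <= s <= h) y.
Proof.
  move=> Hr HL HM Hh HMh Hq HU HFc HFL HFM.
  set q := INR n * L * h.
  have Hq0 : 0 <= q by rewrite /q; have := pos_INR n; move=> ?; apply: Rmult_le_pos; [nra | lra].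
  have Hqq : 0 <= q <= 1/2 by split.
  set pm := pic F p h.
  have Hbox : forall a, (forall i, Rabs (a i - p i) <= M * h) -> box p r a.
    move=> a Ha i; have := Ha i; lra.
  have Hcl : forall s, 0 <= clampab 0 h s <= h by move=> s; apply: clampab_in; lra.
  have Inv : forall m, (forall s i, Rabs (pm m s i - p i) <= M * h) /\
                       (forall s s' i, Rabs (pm m s i - pm m s' i) <= M * Rabs (s - s')).
    elim => [|m [IH1 IH2]].
    - split => [s i|s s' i]; rewrite /pm /= Rminus_diag Rabs_R0.
      + apply: Rmult_le_pos; lra.
      + apply: Rmult_le_pos => //; apply: Rabs_pos.
    - have Hin : forall u, box p r (pm m u) by move=> u; apply: Hbox => i; apply: IH1.
      have Hg : forall i u, continuous (fun u => F (pm m u) i) u.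
        move=> i; apply: (@cont_comp n U (fun x => F x i) (pm m) M (HFc i)) => // u; by apply: HU.
      have HgM : forall i u, Rabs (F (pm m u) i) <= M by move=> i u; apply: HFM.
      split => [s i|s s' i].
      + change (Rabs (p i + RInt (fun u => F (pm m u) i) 0 (clampab 0 h s) - p i) <= M * h).
        have -> : p i + RInt (fun u => F (pm m u) i) 0 (clampab 0 h s) - p i = RInt (fun u => F (pm m u) i) 0 (clampab 0 h s) by ring.
        apply: Rle_trans; first by apply: RInt_bound; [apply: Hg | apply: HgM].
        have Hc1 := Hcl s. rewrite Rminus_0_r Rabs_pos_eq; last lra. apply: Rmult_le_compat_l; lra.
      + change (Rabs ((p i + RInt (fun u => F (pm m u) i) 0 (clampab 0 h s)) - (p i + RInt (fun u => F (pm m u) i) 0 (clampab 0 h s'))) <= M * Rabs (s - s')).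
        have -> : (p i + RInt (fun u => F (pm m u) i) 0 (clampab 0 h s)) - (p i + RInt (fun u => F (pm m u) i) 0 (clampab 0 h s'))
          = RInt (fun u => F (pm m u) i) 0 (clampab 0 h s) - RInt (fun u => F (pm m u) i) 0 (clampab 0 h s') by ring.
        rewrite RInt_diff; last by apply: Hg.
        apply: Rle_trans; first by apply: RInt_bound; [apply: Hg | apply: HgM].
        apply: Rmult_le_compat_l => //; apply: clampab_lip2; lra.
  have Hin : forall m u, box p r (pm m u) by move=> m u; apply: Hbox => i; apply: (proj1 (Inv m)).
  have Hg : forall m i u, continuous (fun u => F (pm m u) i) u.
    move=> m i; apply: (@cont_comp n U (fun x => F x i) (pm m) M (HFc i)) => // [u|u u' j]; [by apply: HU | apply: (proj2 (Inv m))].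
  have Diff : forall s i m, Rabs (pm (S m) s i - pm m s i) <= (M * h) * q ^ m.
    move=> s i m; elim: m s i => [|m IH] s i.
    - rewrite /= Rmult_1_r. exact: (proj1 (Inv 1%nat) s i).
    - change (Rabs ((p i + RInt (fun u => F (pm (S m) u) i) 0 (clampab 0 h s)) - (p i + RInt (fun u => F (pm m u) i) 0 (clampab 0 h s))) <= M * h * q ^ (S m)).
      have -> : (p i + RInt (fun u => F (pm (S m) u) i) 0 (clampab 0 h s)) - (p i + RInt (fun u => F (pm m u) i) 0 (clampab 0 h s))
        = RInt (fun u => F (pm (S m) u) i - F (pm m u) i) 0 (clampab 0 h s).
        rewrite RInt_sub; [ring | apply: Hg | apply: Hg].
      apply: Rle_trans.
        apply: (@RInt_bound _ (L * (INR n * (M * h * q ^ m)))).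
        + move=> u; apply: continuous_minus; apply: Hg.
        + move=> u; apply: Rle_trans; first by apply: HFL; apply: Hin.
          apply: Rmult_le_compat_l => //; apply: asum_le_n => j; rewrite /vsub; apply: IH.
      rewrite Rminus_0_r Rabs_pos_eq; last by have := Hcl s; lra.
      have Hp : 0 <= q ^ m by apply: pow_le.
      have : L * (INR n * (M * h * q ^ m)) * clampab 0 h s <= L * (INR n * (M * h * q ^ m)) * h.
        apply: Rmult_le_compat_l; last by have := Hcl s; lra.
        apply: Rmult_le_pos => //; apply: Rmult_le_pos; [apply: pos_INR | apply: Rmult_le_pos => //; apply: Rmult_le_pos; lra].
      have -> : M * h * q ^ (S m) = L * (INR n * (M * h * q ^ m)) * h by rewrite /= /q; ring.
      lra.
  have HMh0 : 0 <= M * h by apply: Rmult_le_pos; lra.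
  pose Y := fun s i => proj1_sig (@GEO (fun m => pm m s i) (M * h) q Hqq HMh0 (Diff s i)).
  have HY : forall s i m, Rabs (Y s i - pm m s i) <= 2 * (M * h) * q ^ m.
    move=> s i m; exact: (proj2_sig (@GEO (fun m => pm m s i) (M * h) q Hqq HMh0 (Diff s i)) m).
  have Y1 : forall s i, Rabs (Y s i - p i) <= M * h.
    move=> s i; apply: (@lim_le _ _ (2 * (M * h)) q Hqq ltac:(lra)) => m.
    have := HY s i m; have := proj1 (Inv m) s i.
    have := Rabs_triang (Y s i - pm m s i) (pm m s i - p i).
    have -> : Y s i - pm m s i + (pm m s i - p i) = Y s i - p i by ring. lra.
  have Y2 : forall s s' i, Rabs (Y s i - Y s' i) <= M * Rabs (s - s').
    move=> s s' i; apply: (@lim_le _ _ (4 * (M * h)) q Hqq ltac:(lra)) => m.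
    have := HY s i m; have := HY s' i m; have := proj2 (Inv m) s s' i.
    have := Rabs_triang (Y s i - pm m s i) (pm m s i - pm m s' i).
    have := Rabs_triang (Y s i - pm m s i + (pm m s i - pm m s' i)) (pm m s' i - Y s' i).
    have -> : Y s i - pm m s i + (pm m s i - pm m s' i) + (pm m s' i - Y s' i) = Y s i - Y s' i by ring.
    rewrite (Rabs_minus_sym (pm m s' i)). lra.
  have YU : forall s, box p r (Y s) by move=> s; apply: Hbox => i; apply: Y1.
  have HG : forall i u, continuous (fun u => F (Y u) i) u.
    move=> i; apply: (@cont_comp n U (fun x => F x i) Y M (HFc i)); [move=> u; by apply: HU | done | apply: Y2].
  have Y0 : Y 0 = p.
    apply: functional_extensionality => i.
    have P0 : forall m, pm m 0 i = p i.
      case => [|m] //=. change (p i + RInt (fun u => F (pm m u) i) 0 (clampab 0 h 0) = p i). rewrite (@clampab_id 0 h 0); last lra. rewrite RInt_point /zero /=; ring.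
    apply: Rminus_diag_uniq; apply: Rabs_eq_0; apply: Rle_antisym; last apply: Rabs_pos.
    apply: (@lim_le _ _ (2 * (M * h)) q Hqq ltac:(lra)) => m.
    have := HY 0 i m; rewrite P0; lra.
  have Yint : forall s i, Y s i = p i + RInt (fun u => F (Y u) i) 0 (clampab 0 h s).
    move=> s i; apply: Rminus_diag_uniq; apply: Rabs_eq_0; apply: Rle_antisym; last apply: Rabs_pos.
    apply: (@lim_le _ _ (4 * (M * h)) q Hqq ltac:(lra)) => m.
    have E1 := HY s i (S m).
    have E2 : Rabs (pm (S m) s i - (p i + RInt (fun u => F (Y u) i) 0 (clampab 0 h s))) <= M * h * q ^ m.
      change (Rabs ((p i + RInt (fun u => F (pm m u) i) 0 (clampab 0 h s)) - (p i + RInt (fun u => F (Y u) i) 0 (clampab 0 h s))) <= M * h * q ^ m).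
      have -> : (p i + RInt (fun u => F (pm m u) i) 0 (clampab 0 h s)) - (p i + RInt (fun u => F (Y u) i) 0 (clampab 0 h s))
        = RInt (fun u => F (pm m u) i - F (Y u) i) 0 (clampab 0 h s).
        rewrite RInt_sub; [ring | apply: Hg | apply: HG].
      apply: Rle_trans.
        apply: (@RInt_bound _ (L * (INR n * (2 * (M * h) * q ^ m)))).
        + move=> u; apply: continuous_minus; [apply: Hg | apply: HG].
        + move=> u; rewrite Rabs_minus_sym; apply: Rle_trans; first by apply: HFL; [apply: Hin | apply: YU].
          apply: Rmult_le_compat_l => //; apply: asum_le_n => j; rewrite /vsub; apply: HY.
      rewrite Rminus_0_r Rabs_pos_eq; last by have := Hcl s; lra.
      have Hp : 0 <= q ^ m by apply: pow_le.
      have : L * (INR n * (2 * (M * h) * q ^ m)) * clampab 0 h s <= L * (INR n * (2 * (M * h) * q ^ m)) * h.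
        apply: Rmult_le_compat_l; last by have := Hcl s; lra.
        apply: Rmult_le_pos => //; apply: Rmult_le_pos; [apply: pos_INR | apply: Rmult_le_pos => //; apply: Rmult_le_pos; lra].
      have -> : L * (INR n * (2 * (M * h) * q ^ m)) * h = 2 * (M * h * q ^ m) * q by rewrite /q; ring.
      have : M * h * q ^ m * q <= M * h * q ^ m * (1/2) by apply: Rmult_le_compat_l; [apply: Rmult_le_pos | lra].
      lra.
    have Hp : 0 <= q ^ m by apply: pow_le.
    have E3 : q ^ (S m) <= q ^ m.
      change (q * q ^ m <= q ^ m). have : q * q ^ m <= 1 * q ^ m by apply: Rmult_le_compat_r; lra. lra.
    have := Rabs_triang (Y s i - pm (S m) s i) (pm (S m) s i - (p i + RInt (fun u => F (Y u) i) 0 (clampab 0 h s))).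
    have -> : Y s i - pm (S m) s i + (pm (S m) s i - (p i + RInt (fun u => F (Y u) i) 0 (clampab 0 h s))) =
      Y s i - (p i + RInt (fun u => F (Y u) i) 0 (clampab 0 h s)) by ring.
    have : 2 * (M * h) * q ^ (S m) <= 2 * (M * h) * q ^ m by apply: Rmult_le_compat_l; lra.
    have : 0 <= M * h * q ^ m by apply: Rmult_le_pos.
    lra.
  exists Y; split => // t Ht; split; first by apply: HU.
  move=> i.
  set Phi := fun s => RInt (fun u => F (Y u) i) 0 s.
  have D : derivable_pt_lim (fun s => p i + Phi s) t (0 + F (Y t) i).
    apply: derivable_pt_lim_plus; first by apply: derivable_pt_lim_const.
    apply/is_derive_Reals; apply: (is_derive_RInt (fun u => F (Y u) i) Phi 0 t).
    - apply: filter_forall => b; apply: RInt_correct; apply: ex_all; apply: HG.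
    - apply: HG.
  rewrite Rplus_0_l in D.
  apply: (@deriv_in_ext _ (fun s => p i + Phi s)) => //.
  - move=> s Hs; rewrite Yint clampab_id //.
  - by apply: derivable_deriv_in.
Qed.

Lemma fin_min2 n (P : 'I_n -> R -> R -> Prop) :
  (forall j r r' C C', 0 < r' <= r -> C <= C' -> P j r C -> P j r' C') ->
  (forall j, exists r C, 0 < r /\ P j r C) -> exists r C, 0 < r /\ forall j, P j r C.
Proof.
  move=> Hm H.
  suff : forall l : seq 'I_n, exists r C, 0 < r /\ forall j, j \in l -> P j r C.
    move=> /(_ (enum 'I_n)) [r [C [Hr Hl]]]; exists r, C; split => // j; apply: Hl; by rewrite mem_enum.
  elim => [|a l [r [C [Hr Hl]]]]; first by exists 1, 0; split => //; lra.
  have [ra [Ca [Hra Pa]]] := H a.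
  exists (Rmin r ra), (Rmax C Ca); split; first by apply: Rmin_glb_lt.
  move=> j; rewrite in_cons => /orP [/eqP ->|Hj].
  - apply: (Hm a ra _ Ca) => //; [split; [by apply: Rmin_glb_lt | apply: Rmin_r] | apply: Rmax_r].
  - apply: (Hm j r _ C); last by apply: Hl. split; [by apply: Rmin_glb_lt | apply: Rmin_l]. apply: Rmax_l.
Qed.

Lemma sum_prod_le n (g d : 'I_n -> R) : Rabs (rsum (fun j => g j * d j)) <= rsum (fun j => Rabs (g j)) * rsum (fun j => Rabs (d j)).
Proof.
  apply: Rle_trans; first apply: rsum_abs.
  rewrite Rmult_comm -rsum_scal. apply: rsum_le => j.
  rewrite Rabs_mult Rmult_comm; apply: Rmult_le_compat_r; first apply: Rabs_pos.
  apply: (rsum_mem (fun j => Rabs (d j))) => k; apply: Rabs_pos.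
Qed.

Lemma local_data n U X V gradV c (H : @Hyps n U X V gradV c) :
  exists r C, 0 < r /\ forall p, (U p /\ 0 <= V p <= c) -> forall a b, box p r a -> box p r b ->
    U a /\ forall i, Rabs (FF X gradV b i - FF X gradV a i) <= C * asum (vsub b a) /\ Rabs (FF X gradV a i) <= C.
Proof.
  have HU := hU H.
  pose P := fun C a b => U a /\ forall i, Rabs (FF X gradV b i - FF X gradV a i) <= C * asum (vsub b a) /\ Rabs (FF X gradV a i) <= C.
  have Mono : forall C C' a b, C <= C' -> P C a b -> P C' a b.
    move=> C C' a b HC [Ua Hi]; split => // i; have [A B] := Hi i; split; last lra.
    apply: Rle_trans A _; apply: Rmult_le_compat_r => //; apply: asum_nonneg.
  have Loc1 : forall z, U z -> forall i, exists r C, 0 < r /\ forall a b, box z r a -> box z r b ->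
        U a /\ Rabs (FF X gradV b i - FF X gradV a i) <= C * asum (vsub b a) /\ Rabs (FF X gradV a i) <= C.
    move=> z Uz i.
    have [g [Hg1 Hg2]] := smooth_grad HU (FF_smooth H i).
    have [r1 [Hr1 [HU1 HSD]]] := @SD n U (fun x => FF X gradV x i) g z HU Hg1 (fun j => smooth_cont (Hg2 j)) Uz 1 Rlt_0_1.
    have [r2 [Hr2 HC2]] := cont_box z HU (smooth_cont (FF_smooth H i)) Uz Rlt_0_1.
    exists (Rmin r1 r2), (rsum (fun j => Rabs (g j z)) + 1 + Rabs (FF X gradV z i) + 1).
    split; first by apply: Rmin_glb_lt.
    move=> a b Ha Hb.
    have Ha1 : box z r1 a by move=> k; have := Ha k; have := Rmin_l r1 r2; lra.
    have Hb1 : box z r1 b by move=> k; have := Hb k; have := Rmin_l r1 r2; lra.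
    have Ha2 : box z r2 a by move=> k; have := Ha k; have := Rmin_r r1 r2; lra.
    split; first by apply: HU1.
    have Hs := HSD a b Ha1 Hb1.
    have Hsp := sum_prod_le (fun j => g j z) (fun j => b j - a j).
    have Hg0 : 0 <= rsum (fun j => Rabs (g j z)) by apply: rsum_nonneg => j; apply: Rabs_pos.
    have Ha0 := asum_nonneg (vsub b a).
    have [_ Hc2] := HC2 a Ha2.
    have Hfz := Rabs_pos (FF X gradV z i).
    split; last by have := Rabs_triang_inv (FF X gradV a i) (FF X gradV z i); lra.
    set S := rsum (fun j => g j z * (b j - a j)) in Hs Hsp.
    have := Rabs_triang (FF X gradV b i - FF X gradV a i - S) S.
    have -> : FF X gradV b i - FF X gradV a i - S + S = FF X gradV b i - FF X gradV a i by ring.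
    rewrite /asum /vsub in Hsp Ha0 Hs *.
    set A := rsum (fun j => Rabs (g j z)) in Hg0 Hsp *.
    set B := rsum (fun j => Rabs (b j - a j)) in Ha0 Hsp Hs *.
    nra.
  have Loc : forall z, U z /\ 0 <= V z <= c -> exists d C, 0 < d /\ forall a b, box z d a -> box z d b -> P C a b.
    move=> z [Uz _].
    have Mono2 : forall j r r' C C', 0 < r' <= r -> C <= C' ->
      (forall a b, box z r a -> box z r b -> U a /\ Rabs (FF X gradV b j - FF X gradV a j) <= C * asum (vsub b a) /\ Rabs (FF X gradV a j) <= C) ->
      (forall a b, box z r' a -> box z r' b -> U a /\ Rabs (FF X gradV b j - FF X gradV a j) <= C' * asum (vsub b a) /\ Rabs (FF X gradV a j) <= C').
      move=> j r r' C C' Hr' HC HP a b Ha Hb.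
      have Ha' : box z r a by move=> k; have := Ha k; lra.
      have Hb' : box z r b by move=> k; have := Hb k; lra.
      have [A [B D]] := HP a b Ha' Hb'; split => //; split; last lra.
      apply: Rle_trans B _; apply: Rmult_le_compat_r => //; apply: asum_nonneg.
    have [r [C [Hr HP]]] := @fin_min2 n (fun i r C => forall a b, box z r a -> box z r b ->
        U a /\ Rabs (FF X gradV b i - FF X gradV a i) <= C * asum (vsub b a) /\ Rabs (FF X gradV a i) <= C)
      Mono2 (Loc1 z Uz).
    have [r0 [Hr0 HU0]] := open_box z HU Uz.
    exists (Rmin r r0), C; split; first by apply: Rmin_glb_lt.
    move=> a b Ha Hb; split.
    + apply: HU0 => k; have := Ha k; have := Rmin_r r r0; lra.
    + move=> i; have [_ HH] := HP i a b ltac:(move=> k; have := Ha k; have := Rmin_l r r0; lra)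
                                   ltac:(move=> k; have := Hb k; have := Rmin_l r r0; lra).
      exact: HH.
  exact: (@unif n (fun x => U x /\ 0 <= V x <= c) P (hA2 H) Mono Loc).
Qed.

Lemma local_exist n U X V gradV c (H : @Hyps n U X V gradV c) :
  exists h, 0 < h /\ forall p, (U p /\ 0 <= V p <= c) ->
    exists y, y 0 = p /\ sol U (FF X gradV) (fun s => 0 <= s <= h) y.
Proof.
  have [r [C [Hr HD]]] := local_data H.
  set M := Rabs C.
  have HM : 0 <= M by apply: Rabs_pos.
  have HN := pos_INR n.
  set h := Rmin (r / (2 * (M + 1))) (1 / (2 * (INR n * M + 1))).
  have HnM : 0 <= INR n * M by apply: Rmult_le_pos.
  have Hh : 0 < h by apply: Rmin_glb_lt; apply: Rdiv_lt_0_compat; lra.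
  exists h; split => // p Kp.
  apply: (@picard n U (FF X gradV) p r M M h) => //.
  - have : h <= r / (2 * (M + 1)) by apply: Rmin_l.
    move=> H1; have : M * h <= M * (r / (2 * (M + 1))) by apply: Rmult_le_compat_l.
    have : M * (r / (2 * (M + 1))) <= r / 2.
      apply: (Rmult_le_reg_r (2 * (M + 1))); first lra. field_simplify; nra.
    lra.
  - have : h <= 1 / (2 * (INR n * M + 1)) by apply: Rmin_r.
    move=> H1; have : INR n * M * h <= INR n * M * (1 / (2 * (INR n * M + 1))) by apply: Rmult_le_compat_l.
    have : INR n * M * (1 / (2 * (INR n * M + 1))) <= 1 / 2.
      apply: (Rmult_le_reg_r (2 * (INR n * M + 1))); first lra. field_simplify; nra.
    lra.
  - move=> a Ha; by have [] := HD p Kp a a Ha Ha.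
  - move=> i; apply: smooth_cont; exact: (FF_smooth H i).
  - move=> a b i Ha Hb; have [_ Hi] := HD p Kp a b Ha Hb; have [A _] := Hi i.
    apply: Rle_trans A _; apply: Rmult_le_compat_r; [apply: asum_nonneg | apply: Rle_abs].
  - move=> a i Ha; have [_ Hi] := HD p Kp a a Ha Ha; have [_ B] := Hi i.
    apply: Rle_trans B _; apply: Rle_abs.
Qed.

Lemma floor_unique h m t : 0 < h -> INR m * h <= t < (INR m + 1) * h ->
  Z.to_nat (Int_part (t / h)) = m.
Proof.
  move=> Hh [H1 H2].
  have [B1 B2] := base_Int_part (t / h).
  have A1 : INR m <= t / h by apply: (Rmult_le_reg_r h) => //; rewrite /Rdiv Rmult_assoc Rinv_l; lra.
  have A2 : t / h < INR m + 1 by apply: (Rmult_lt_reg_r h) => //; rewrite /Rdiv Rmult_assoc Rinv_l; lra.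
  rewrite INR_IZR_INZ in A1 A2.
  have Z1 : (Int_part (t / h) < Z.of_nat m + 1)%Z.
    apply: lt_IZR; rewrite plus_IZR; lra.
  have Z2 : (Z.of_nat m < Int_part (t / h) + 1)%Z.
    apply: lt_IZR; rewrite plus_IZR; lra.
  have -> : Int_part (t / h) = Z.of_nat m by lia.
  by rewrite Nat2Z.id.
Qed.

Lemma floor_spec h t : 0 < h -> 0 <= t ->
  INR (Z.to_nat (Int_part (t / h))) * h <= t < (INR (Z.to_nat (Int_part (t / h))) + 1) * h.
Proof.
  move=> Hh Ht.
  have [B1 B2] := base_Int_part (t / h).
  have Hth : 0 <= t / h by apply: Rdiv_le_0_compat.
  have Z0 : (0 <= Int_part (t / h))%Z.
    have : (-1 < Int_part (t / h))%Z by apply: lt_IZR; lra.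
    lia.
  rewrite INR_IZR_INZ Z2Nat.id //.
  split.
  - have := Rmult_le_compat_r h _ _ (Rlt_le _ _ Hh) B1. rewrite /Rdiv Rmult_assoc Rinv_l; lra.
  - have : t / h < IZR (Int_part (t / h)) + 1 by lra.
    move=> H1; have := Rmult_lt_compat_r h _ _ Hh H1. rewrite /Rdiv Rmult_assoc Rinv_l; lra.
Qed.

Lemma claim1 n U X V gradV c (H : @Hyps n U X V gradV c) :
  forall x0, (U x0 /\ 0 <= V x0 <= c) -> exists x, sol U (FF X gradV) (fun t => 0 <= t) x /\ x 0 = x0.
Proof.
  move=> x0 Kx0.
  have [h [Hh Hloc]] := local_exist H.
  set K := fun p => U p /\ 0 <= V p <= c.
  set F := FF X gradV.
  have E : forall p, exists y, K p -> y 0 = p /\ sol U F (fun s => 0 <= s <= h) y.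
    move=> p; case: (classic (K p)) => Kp.
    - have [y Hy] := Hloc p Kp; by exists y.
    - by exists (fun _ => p).
  pose Phi := fun p => proj1_sig (constructive_indefinite_description _ (E p)).
  have PhiP : forall p, K p -> Phi p 0 = p /\ sol U F (fun s => 0 <= s <= h) (Phi p).
    move=> p; exact: (proj2_sig (constructive_indefinite_description _ (E p))).
  have HIh : is_interval (fun s => 0 <= s <= h) by move=> s t u Hs Hu ? ?; lra.
  have PhiK : forall p, K p -> K (Phi p h).
    move=> p Kp; have [P0 Ps] := PhiP p Kp.
    have K0 : K (Phi p 0) by rewrite P0.
    exact: (@claim2 n U X V gradV c H (fun s => 0 <= s <= h) (Phi p) HIh ltac:(lra) ltac:(move=> t Ht; lra) Ps K0 h ltac:(lra)).
  pose pts := fix f (m : nat) : Rn n := match m with O => x0 | S m' => Phi (f m') h end.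
  have Kpts : forall m, K (pts m) by elim => [|m IH] //=; apply: PhiK.
  pose mt := fun t => Z.to_nat (Int_part (t / h)).
  pose x := fun t => Phi (pts (mt t)) (t - INR (mt t) * h).
  have Piece : forall m s, INR m * h <= s <= (INR m + 1) * h -> x s = Phi (pts m) (s - INR m * h).
    move=> m s Hs.
    case: (Rlt_le_dec s ((INR m + 1) * h)) => Hs2.
    - rewrite /x /mt (@floor_unique h m s) //; lra.
    - have Es : s = (INR m + 1) * h by lra.
      have Hm1 : mt s = S m.
        rewrite /mt (@floor_unique h (S m) s) // S_INR; split; [lra|].
        have : (INR m + 1) * h < (INR m + 1 + 1) * h by apply: Rmult_lt_compat_r; lra. lra.
      rewrite /x Hm1 S_INR.
      have -> : s - (INR m + 1) * h = 0 by lra.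
      have -> : s - INR m * h = h by lra.
      have [P0 _] := PhiP (pts (S m)) (Kpts (S m)). by rewrite P0.
  have PD : forall m t i, INR m * h <= t <= (INR m + 1) * h ->
      deriv_in (fun s => INR m * h <= s <= (INR m + 1) * h) (fun s => x s i) t (F (x t) i).
    move=> m t i Ht.
    have [_ Ps] := PhiP (pts m) (Kpts m).
    have [_ Hd] := Ps (t - INR m * h) ltac:(lra).
    have D1 := @deriv_in_shift _ _ _ _ (INR m * h) (Hd i).
    have Et : t - INR m * h + INR m * h = t by ring. rewrite Et in D1.
    rewrite -(Piece m t Ht) in D1.
    apply: (@deriv_in_ext _ (fun s => Phi (pts m) (s - INR m * h) i)).
    + move=> s Hs; by rewrite (Piece m s Hs).
    + exact: Ht.
    + apply: deriv_in_sub D1. exists 1; split; [lra|] => s Hs _; lra.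
  exists x; split.
  - move=> t Ht.
    set m := mt t.
    have Hm : INR m * h <= t < (INR m + 1) * h by apply: floor_spec.
    have Hx : x t = Phi (pts m) (t - INR m * h) by apply: Piece; lra.
    split.
    + rewrite Hx. have [_ Ps] := PhiP (pts m) (Kpts m). by have [] := Ps (t - INR m * h) ltac:(lra).
    + move=> i.
      case: (Rle_lt_or_eq_dec (INR m * h) t (proj1 Hm)) => Hlt; last first.
      *
        case Em : m => [|k].
        -- apply: deriv_in_sub (PD 0%nat t i ltac:(rewrite Em in Hm; lra)).
           exists ((INR 0 + 1) * h - t); split; first by rewrite Em in Hm; lra.
           move=> s Hs Hs'; rewrite /= in Hs' *; split_Rabs; lra.
        -- rewrite Em in Hm Hlt.
           rewrite S_INR in Hm Hlt.
           apply: (@deriv_in_union _ (fun s => INR k * h <= s <= (INR k + 1) * h)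
                     (fun s => INR (S k) * h <= s <= (INR (S k) + 1) * h)).
           ++ exists h; split => // s Hs Hs'. rewrite S_INR. split_Rabs; lra.
           ++ apply: PD; have := pos_INR k; lra.
           ++ apply: PD; rewrite S_INR; lra.
      * apply: deriv_in_sub (PD m t i ltac:(lra)).
        exists (Rmin (t - INR m * h) ((INR m + 1) * h - t)); split.
        -- apply: Rmin_glb_lt; lra.
        -- move=> s Hs Hs'.
           have := Rmin_l (t - INR m * h) ((INR m + 1) * h - t).
           have := Rmin_r (t - INR m * h) ((INR m + 1) * h - t).
           split_Rabs; lra.
  - have E0 : mt 0 = 0%nat by rewrite /mt (@floor_unique h 0 0) //=; lra.
    rewrite /x E0 /= Rmult_0_l Rminus_0_r.
    have [P0 _] := PhiP x0 Kx0. exact: P0.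
Qed.

Lemma taylor_up (phi phi1 phi2 : R -> R) a r M :
  0 < r -> 0 <= M ->
  (forall s, a - r <= s <= a + r -> derivable_pt_lim phi s (phi1 s)) ->
  (forall s, a - r <= s <= a + r -> derivable_pt_lim phi1 s (phi2 s)) ->
  (forall s, a - r <= s <= a + r -> Rabs (phi2 s) <= M) ->
  forall s, a - r <= s <= a + r -> phi s <= phi a + phi1 a * (s - a) + M * (s - a) ^ 2.
Proof.
  move=> Hr HM H1 H2 HB s Hs.
  have Hin : forall c, Rmin a s <= c <= Rmax a s -> a - r <= c <= a + r.
    move=> c; rewrite /Rmin /Rmax; case: Rle_dec => ? ?; lra.
  have [c [Hc Ec]] := @MVT1 phi phi1 a s (fun t Ht => H1 t (Hin t Ht)).
  have Hin2 : forall e, Rmin a c <= e <= Rmax a c -> a - r <= e <= a + r.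
    move=> e; have := Hin c Hc; rewrite /Rmin /Rmax; repeat case: Rle_dec => ? ; lra.
  have [e [He Ee]] := @MVT1 phi1 phi2 a c (fun t Ht => H2 t (Hin2 t Ht)).
  have Hbe := HB e (Hin2 e He).
  have E1 : phi s - phi a = phi1 a * (s - a) + phi2 e * (c - a) * (s - a) by rewrite Ec; nra.
  have Hca : Rabs (c - a) <= Rabs (s - a).
    move: Hc; rewrite /Rmin /Rmax; case: Rle_dec => ? ?; split_Rabs; lra.
  have : phi2 e * (c - a) * (s - a) <= M * (s - a) ^ 2.
    have : Rabs (phi2 e * (c - a) * (s - a)) <= M * (s - a) ^ 2.
      rewrite !Rabs_mult.
      have -> : (s - a) ^ 2 = Rabs (s - a) * Rabs (s - a) by rewrite -pow2_abs; ring.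
      have := Rabs_pos (c - a); have := Rabs_pos (s - a); have := Rabs_pos (phi2 e).
      move=> ? ? ?. rewrite Rmult_assoc. apply: Rmult_le_compat => //; try nra.
    move=> H3; have := Rle_abs (phi2 e * (c - a) * (s - a)); lra.
  lra.
Qed.

Lemma glaeser1 (phi phi1 phi2 : R -> R) a r M B :
  0 < r -> 0 <= M -> 0 <= B ->
  (forall s, a - r <= s <= a + r -> derivable_pt_lim phi s (phi1 s)) ->
  (forall s, a - r <= s <= a + r -> derivable_pt_lim phi1 s (phi2 s)) ->
  (forall s, a - r <= s <= a + r -> Rabs (phi2 s) <= M) ->
  (forall s, a - r <= s <= a + r -> 0 <= phi s) ->
  Rabs (phi1 a) <= B ->
  phi1 a ^ 2 <= (4 * (M + 1) + 2 * B / r) * phi a.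
Proof.
  move=> Hr HM HB H1 H2 HBd Hpos Ha.
  set M' := M + 1.
  have HM' : 0 < M' by rewrite /M'; lra.
  have T := @taylor_up phi phi1 phi2 a r M' Hr ltac:(lra) H1 H2 ltac:(move=> s Hs; have := HBd s Hs; rewrite /M'; lra).
  set d := phi1 a in Ha T *.
  have Hpa : 0 <= phi a by apply: Hpos; lra.
  have HBr : 0 <= 2 * B / r by rewrite /Rdiv; apply: Rmult_le_pos; [lra | apply: Rlt_le; apply: Rinv_0_lt_compat].
  case: (Rle_dec (Rabs d) (2 * M' * r)) => Hd.
  - set h := - d / (2 * M').
    have Hh : Rabs h <= r.
      rewrite /h /Rdiv Rabs_mult Rabs_Ropp Rabs_inv (Rabs_pos_eq (2 * M')); last lra.
      apply: (Rmult_le_reg_r (2 * M')); first lra.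
      rewrite Rmult_assoc Rinv_l; last lra. nra.
    have := T (a + h) ltac:(split_Rabs; lra).
    have -> : a + h - a = h by ring.
    move=> H3.
    have Ea : d * h = - d ^ 2 / (2 * M') by rewrite /h; field; lra.
    have Eb : M' * h ^ 2 = d ^ 2 / (4 * M') by rewrite /h; field; lra.
    have Ec : - d ^ 2 / (2 * M') + d ^ 2 / (4 * M') = - (d ^ 2 / (4 * M')) by field; lra.
    have Hpos2 := Hpos (a + h) ltac:(split_Rabs; lra).
    have : d ^ 2 / (4 * M') <= phi a by lra.
    move=> H4.
    have : d ^ 2 <= 4 * M' * phi a.
      have E : d ^ 2 = d ^ 2 / (4 * M') * (4 * M') by field; lra.
      rewrite E. have := Rmult_le_compat_r (4 * M') _ _ ltac:(lra) H4. lra.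
    have : 0 <= 2 * B / r * phi a by apply: Rmult_le_pos.
    rewrite /M'. lra.
  -
    set h := if Rle_dec 0 d then - r else r.
    have Hh : Rabs h = r /\ d * h = - Rabs d * r.
      rewrite /h; case: Rle_dec => Hd0 /=.
      + rewrite Rabs_Ropp (Rabs_pos_eq r); [|lra]. rewrite (Rabs_pos_eq d) //; split; [done|simpl; ring].
      + rewrite (Rabs_pos_eq r); [|lra]. rewrite (Rabs_left d); [|lra]. split; [done|simpl; ring].
    have [Hh1 Hh2] := Hh.
    have := T (a + h) ltac:(split_Rabs; lra).
    have -> : a + h - a = h by ring.
    have Hh3 : h ^ 2 = r ^ 2 by rewrite -pow2_abs Hh1.
    rewrite Hh2 Hh3 => H3.
    have Hpos2 := Hpos (a + h) ltac:(split_Rabs; lra).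
    have H5 : Rabs d * r <= 2 * phi a.
      have : M' * r ^ 2 < Rabs d * r / 2.
        have -> : M' * r ^ 2 = (2 * M' * r) * r / 2 by field.
        have : (2 * M' * r) * r < Rabs d * r by apply: Rmult_lt_compat_r; lra.
        lra.
      lra.
    have H6 : Rabs d <= 2 * phi a / r.
      apply: (Rmult_le_reg_r r) => //. rewrite /Rdiv Rmult_assoc Rinv_l; lra.
    have : d ^ 2 = Rabs d * Rabs d by rewrite -pow2_abs; ring.
    move=> ->.
    have : Rabs d * Rabs d <= B * (2 * phi a / r).
      apply: Rmult_le_compat; try apply: Rabs_pos; lra.
    have -> : B * (2 * phi a / r) = 2 * B / r * phi a by field; lra.
    have : 0 <= 4 * (M + 1) * phi a by apply: Rmult_le_pos; lra.
    rewrite Rmult_plus_distr_r. move=> A1 A2. nra.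
Qed.

Lemma fin_min2' n (P : 'I_n -> R -> R -> Prop) :
  (forall j r r' C C', 0 < r' <= r -> C <= C' -> P j r C -> P j r' C') ->
  (forall j, exists r C, 0 < r /\ P j r C) -> exists r C, 0 < r /\ forall j, P j r C.
Proof.
  move=> Hm H.
  suff : forall l : seq 'I_n, exists r C, 0 < r /\ forall j, j \in l -> P j r C.
    move=> /(_ (enum 'I_n)) [r [C [Hr Hl]]]; exists r, C; split => // j; apply: Hl; by rewrite mem_enum.
  elim => [|a l [r [C [Hr Hl]]]]; first by exists 1, 0; split => //; lra.
  have [ra [Ca [Hra Pa]]] := H a.
  exists (Rmin r ra), (Rmax C Ca); split; first by apply: Rmin_glb_lt.
  move=> j; rewrite in_cons => /orP [/eqP ->|Hj].
  - apply: (Hm a ra _ Ca) => //; [split; [by apply: Rmin_glb_lt | apply: Rmin_r] | apply: Rmax_r].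
  - apply: (Hm j r _ C); last by apply: Hl. split; [by apply: Rmin_glb_lt | apply: Rmin_l]. apply: Rmax_l.
Qed.

Lemma local_glaeser n U X V gradV c (H : @Hyps n U X V gradV c) z : U z ->
  exists r C, 0 < r /\ forall y, box z r y -> U y /\ rsum (fun j => gradV j y ^ 2) <= C * V y.
Proof.
  move=> Uz.
  have HU := hU H.
  have Loc : forall j, exists r C, 0 < r /\ forall y, box z r y -> U y /\ gradV j y ^ 2 <= C * V y.
    move=> j.
    have [g [Hg1 Hg2]] := smooth_grad HU (grad_smooth H j).
    have [r1 [Hr1 H1]] := cont_box z HU (grad_cont H j) Uz Rlt_0_1.
    have [r2 [Hr2 H2]] := cont_box z HU (smooth_cont (Hg2 j)) Uz Rlt_0_1.
    set r0 := Rmin r1 r2.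
    have Hr0 : 0 < r0 by apply: Rmin_glb_lt.
    set M := Rabs (g j z) + 1. set B := Rabs (gradV j z) + 1.
    have HM : 0 <= M by rewrite /M; have := Rabs_pos (g j z); lra.
    have HB : 0 <= B by rewrite /B; have := Rabs_pos (gradV j z); lra.
    exists (r0 / 2), (4 * (M + 1) + 2 * B / (r0 / 2)); split; first lra.
    move=> y Hy.
    have Hbox : forall s, y j - r0 / 2 <= s <= y j + r0 / 2 -> box z r1 (upd y j s) /\ box z r2 (upd y j s).
      move=> s Hs; split => k; rewrite /upd; case: eqP => [->|_].
      - have := Hy j; have := Rmin_l r1 r2; rewrite -/r0 => ? ?; split_Rabs; lra.
      - have := Hy k; have := Rmin_l r1 r2; rewrite -/r0 => ? ?; lra.
      - have := Hy j; have := Rmin_r r1 r2; rewrite -/r0 => ? ?; split_Rabs; lra.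
      - have := Hy k; have := Rmin_r r1 r2; rewrite -/r0 => ? ?; lra.
    have Uy : U y.
      have := Hbox (y j) ltac:(lra); rewrite upd_same; case => /H1 [] //.
    split => //.
    have := @glaeser1 (fun s => V (upd y j s)) (fun s => gradV j (upd y j s)) (fun s => g j (upd y j s)) (y j) (r0 / 2) M B
      ltac:(lra) HM HB.
    rewrite upd_same. apply.
    + move=> s Hs; apply: partial_line; apply: (hgrad H).
      by have [Hb1 _] := Hbox s Hs; have [] := H1 _ Hb1.
    + move=> s Hs; apply: partial_line; apply: Hg1.
      by have [Hb1 _] := Hbox s Hs; have [] := H1 _ Hb1.
    + move=> s Hs; have [_ Hb2] := Hbox s Hs; have [_ A] := H2 _ Hb2.
      rewrite /M; have := Rabs_triang_inv (g j (upd y j s)) (g j z); lra.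
    + move=> s Hs; apply: (hA1a H); by have [Hb1 _] := Hbox s Hs; have [] := H1 _ Hb1.
    + have := Hbox (y j) ltac:(lra); rewrite upd_same; case => /H1 [_ A] _.
      rewrite /B; have := Rabs_triang_inv (gradV j y) (gradV j z); lra.
  have [r [C [Hr HP]]] := @fin_min2' n (fun j r C => forall y, box z r y -> U y /\ gradV j y ^ 2 <= C * V y)
    ltac:(move=> j r r' C C' Hr' HC HP y Hy;
          have [Uy A] := HP y ltac:(move=> k; have := Hy k; lra);
          split => //; have := hA1a H y Uy; nra)
    Loc.
  have [r0 [Hr0 HU0]] := open_box z HU Uz.
  exists (Rmin r r0), (INR n * C); split; first by apply: Rmin_glb_lt.
  move=> y Hy.
  have Hy1 : box z r y by move=> k; have := Hy k; have := Rmin_l r r0; lra.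
  have Uy : U y by apply: HU0 => k; have := Hy k; have := Rmin_r r r0; lra.
  split => //.
  have := @rsum_const_le n (fun j => gradV j y ^ 2) (C * V y) ltac:(move=> j; by have [] := HP j y Hy1).
  lra.
Qed.

Lemma dexp C s : derivable_pt_lim (fun s => exp (C * s)) s (C * exp (C * s)).
Proof.
  apply/is_derive_Reals. auto_derive; [done | ring].
Qed.

Lemma x_cont_box n (I : R -> Prop) (x : R -> Rn n) (v : 'I_n -> R) T rho : 0 < rho ->
  (forall j, deriv_in I (fun s => x s j) T (v j)) ->
  exists d, 0 < d /\ forall s, I s -> Rabs (s - T) < d -> box (x T) rho (x s).
Proof.
  move=> Hr Hd.
  have [d [Hd0 Hj]] := @fin_min n (fun j d => forall s, I s -> Rabs (s - T) < d -> Rabs (x s j - x T j) < rho)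
    ltac:(move=> j d d' Hd' H s Is Hs; apply: H => //; lra)
    ltac:(move=> j; have [d1 [Hd1 H1]] := deriv_in_cont (Hd j);
          have Hv := Rabs_pos (v j);
          exists (Rmin d1 (rho / (Rabs (v j) + 1))); split;
          [ apply: Rmin_glb_lt => //; apply: Rdiv_lt_0_compat; lra
          | move=> s Is Hs;
            have := Rmin_l d1 (rho / (Rabs (v j) + 1)); have := Rmin_r d1 (rho / (Rabs (v j) + 1));
            move=> A B; have C1 := H1 s Is ltac:(lra);
            have : (Rabs (v j) + 1) * Rabs (s - T) < (Rabs (v j) + 1) * (rho / (Rabs (v j) + 1));
            [ apply: Rmult_lt_compat_l; lra
            | have -> : (Rabs (v j) + 1) * (rho / (Rabs (v j) + 1)) = rho by field; lra ]; lra ]).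
  exists d; split => // s Is Hs j; by apply: Hj.
Qed.

Lemma claim5 n U X V gradV c (H : @Hyps n U X V gradV c) :
  invariant_set U (FF X gradV) (fun x => U x /\ V x = 0).
Proof.
  move=> I x HI I0 Hs [U0 V0] t It.
  have [Ut _] := Hs t It; split => //.
  set W := fun s => V (x s).
  have Wpos : forall s, I s -> 0 <= W s by move=> s Is; have [Us _] := Hs s Is; apply: (hA1a H).
  have Wdec : forall a b, I a -> I b -> a <= b -> W b <= W a.
    move=> a b Ia Ib Hab; exact: (@V_nonincr n U X V gradV c H I x a b HI Hs Ia Ib Hab).
  have dW : forall s, I s -> deriv_in I W s (- rsum (fun j => gradV j (x s) ^ 2)).
    move=> s Is; exact: (@dV_sol n U X V gradV c H I x s Hs Is).
  case: (Rle_dec 0 t) => Ht.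
  - have := Wdec 0 t I0 It Ht; have := Wpos t It; rewrite /W V0; lra.
  - have Ht' : t < 0 by lra.
    have Isub : forall s, t <= s <= 0 -> I s by move=> s Hs'; apply: (HI t s 0) => //; lra.
    pose E := fun u => t <= - u <= 0 /\ W (- u) = 0.
    have Eb : bound E by exists (- t) => u [[A B] _]; lra.
    have Ene : exists u, E u by exists 0; rewrite /E Ropp_0; split; [lra | by rewrite /W V0].
    have [m [Hm1 Hm2]] := completeness E Eb Ene.
    set T := - m.
    have Hlow : forall s, t <= s <= 0 -> W s = 0 -> T <= s.
      move=> s Hs1 Hs2; have : E (- s) by rewrite /E Ropp_involutive. move=> /Hm1; rewrite /T; lra.
    have HT0 : T <= 0 by apply: Hlow; [lra | rewrite /W V0].
    have HTt : t <= T.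
      have : m <= - t by apply: Hm2 => u [[A B] _]; lra.
      rewrite /T; lra.
    have Happ : forall eps, 0 < eps -> exists s, t <= s <= 0 /\ W s = 0 /\ s < T + eps.
      move=> eps He; apply: NNPP => Hno.
      have : m <= m - eps.
        apply: Hm2 => u [Hu1 Hu2]. apply: Rnot_lt_le => Hlt. apply: Hno.
        exists (- u); split; [done | split; [done | rewrite /T; lra]].
      lra.
    have WT : W T = 0.
      apply: Rle_antisym; last by apply: Wpos; apply: Isub; lra.
      have [dd [Hdd HK]] := deriv_in_cont (dW T (Isub T ltac:(lra))).
      set K := Rabs (- rsum (fun j => gradV j (x T) ^ 2)) + 1 in HK.
      have HK0 : 0 < K by rewrite /K; have := Rabs_pos (- rsum (fun j => gradV j (x T) ^ 2)); lra.
      apply: le_epsilon => e He.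
      have Hee : 0 < Rmin dd (e / K) by apply: Rmin_glb_lt => //; apply: Rdiv_lt_0_compat.
      have [s [Hs1 [Hs2 Hs3]]] := Happ _ Hee.
      have HsT : T <= s by apply: Hlow.
      have := HK s (Isub s Hs1) ltac:(have := Rmin_l dd (e / K); split_Rabs; lra).
      rewrite Hs2.
      have : K * Rabs (s - T) <= K * (e / K).
        apply: Rmult_le_compat_l; [lra|]. have := Rmin_r dd (e / K). split_Rabs; lra.
      have -> : K * (e / K) = e by field; lra.
      move=> A B; have := Rabs_pos (0 - W T); split_Rabs; lra.
    case: (Req_dec T t) => HTe; first by rewrite -HTe.
    have HTt' : t < T by lra.
    have IT : I T by apply: Isub; lra.
    have [UT HdT] := Hs T IT.
    have [rho [C [Hrho HG]]] := @local_glaeser n U X V gradV c H (x T) UT.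
    have [d [Hd Hbx]] := @x_cont_box n I x _ T rho Hrho HdT.
    set T' := Rmax t (T - d / 2).
    have HT'1 : t <= T' by apply: Rmax_l.
    have HT'2 : T' < T by rewrite /T'; apply: Rmax_lub_lt; lra.
    pose J := fun s => T' <= s <= T.
    have HJ : is_interval J by move=> a b e Ha He ? ?; rewrite /J in Ha He *; lra.
    have JI : forall s, J s -> I s by move=> s [A B]; apply: Isub; lra.
    have Jbox : forall s, J s -> box (x T) rho (x s).
      move=> s [A B]; apply: Hbx; first by apply: JI.
      have : T - d / 2 <= T' by apply: Rmax_r. split_Rabs; lra.
    pose Q := fun s => (-1) * (W s * exp (C * s)).
    have dQ : forall s, J s -> deriv_in J Q s ((-1) * ((- rsum (fun j => gradV j (x s) ^ 2)) * exp (C * s) + W s * (C * exp (C * s)))).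
      move=> s Js.
      apply: (@deriv_in_scal J (fun s => W s * exp (C * s)) s _ (-1)) .
      apply: deriv_in_mult => //.
      - apply: (@deriv_in_sub J I) (dW s (JI s Js)). exists 1; split; [lra|] => u Ju _; by apply: JI.
      - apply: derivable_deriv_in; apply: dexp.
    have Dneg : forall s, J s -> (-1) * ((- rsum (fun j => gradV j (x s) ^ 2)) * exp (C * s) + W s * (C * exp (C * s))) <= 0.
      move=> s Js; have [_ G] := HG (x s) (Jbox s Js).
      have He := exp_pos (C * s).
      have : rsum (fun j => gradV j (x s) ^ 2) * exp (C * s) <= C * V (x s) * exp (C * s).
        apply: Rmult_le_compat_r; lra.
      rewrite /W; lra.
    have := @nonincr_I J Q _ T' T HJ ltac:(rewrite /J; lra) ltac:(rewrite /J; lra) ltac:(lra) dQ Dneg.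
    rewrite /Q WT Rmult_0_l => HQ.
    have HWT' : W T' = 0.
      apply: Rle_antisym; last by apply: Wpos; apply: JI; rewrite /J; lra.
      have He := exp_pos (C * T').
      apply: (Rmult_le_reg_r (exp (C * T'))) => //. lra.
    have := Hlow T' ltac:(lra) HWT'. lra.
Qed.

Definition tends0 (u : R -> R) : Prop := forall eps, 0 < eps -> exists T, forall t, T <= t -> Rabs (u t) < eps.
Definition I0 := fun t : R => 0 <= t.

Lemma I0_int : is_interval I0.
Proof. move=> s t u Hs Hu ? ?; rewrite /I0 in Hs Hu *; lra. Qed.

Lemma barbalat (f g e : R -> R) L :
  (forall t, I0 t -> deriv_in I0 f t (g t + e t)) -> tends0 f -> tends0 e ->
  (forall a b, I0 a -> I0 b -> Rabs (g b - g a) <= L * Rabs (b - a)) -> tends0 g.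
Proof.
  move=> Hd Hf He Hg eps Heps.
  set L' := Rabs L + 1.
  have HL' : 0 < L' by rewrite /L'; have := Rabs_pos L; lra.
  have Hg' : forall a b, I0 a -> I0 b -> Rabs (g b - g a) <= L' * Rabs (b - a).
    move=> a b Ia Ib; apply: Rle_trans (Hg a b Ia Ib) _; apply: Rmult_le_compat_r; [apply: Rabs_pos|].
    rewrite /L'; have := Rle_abs L; lra.
  set d := eps / (2 * L').
  have Hd0 : 0 < d by rewrite /d; apply: Rdiv_lt_0_compat; lra.
  have [T1 H1] := He (eps / 4) ltac:(lra).
  have [T2 H2] := Hf (d * eps / 10) ltac:(apply: Rdiv_lt_0_compat; [nra | lra]).
  exists (Rmax 0 (Rmax T1 T2)) => t Ht.
  have := Rmax_l 0 (Rmax T1 T2); have := Rmax_r 0 (Rmax T1 T2);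
  have := Rmax_l T1 T2; have := Rmax_r T1 T2. move=> ? ? ? ?.
  apply: Rnot_le_lt => Hge.
  have It : I0 t by rewrite /I0; lra.
  have Itd : I0 (t + d) by rewrite /I0; lra.
  have [c [Hc Ec]] := @MVTI I0 f (fun s => g s + e s) t (t + d) I0_int It Itd ltac:(lra) Hd.
  have Ic : I0 c by rewrite /I0; lra.
  have Hgc : Rabs (g c - g t) <= eps / 2.
    apply: Rle_trans (Hg' t c It Ic) _.
    have : Rabs (c - t) <= d by split_Rabs; lra.
    move=> A; apply: Rle_trans (Rmult_le_compat_l _ _ _ (Rlt_le _ _ HL') A) _.
    rewrite /d; apply: Req_le; field; lra.
  have Hec := H1 c ltac:(lra).
  have Hft := H2 t ltac:(lra). have Hftd := H2 (t + d) ltac:(lra).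
  have Hsum : eps / 4 <= Rabs (g c + e c).
    have := Rabs_triang (g c + e c) (- (g c - g t + e c)).
    rewrite Rabs_Ropp.
    have -> : g c + e c + - (g c - g t + e c) = g t by ring.
    have := Rabs_triang (g c - g t) (e c). lra.
  have : Rabs (f (t + d) - f t) = Rabs (g c + e c) * d.
    rewrite Ec Rabs_mult; have -> : t + d - t = d by ring. rewrite (Rabs_pos_eq d) //; lra.
  have := Rabs_triang (f (t + d)) (- f t). rewrite Rabs_Ropp.
  have : eps / 4 * d <= Rabs (g c + e c) * d by apply: Rmult_le_compat_r; lra.
  move=> A B C.
  have : d * eps / 10 + d * eps / 10 < eps / 4 * d by nra.
  have E : f (t + d) + - f t = f (t + d) - f t by ring.
  rewrite E in B. lra.
Qed.

Lemma tends0_ext (u v : R -> R) : (forall t, I0 t -> u t = v t) -> tends0 u -> tends0 v.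
Proof.
  move=> E H eps He; have [T HT] := H eps He; exists (Rmax 0 T) => t Ht.
  rewrite -E; [apply: HT; have := Rmax_r 0 T; lra | rewrite /I0; have := Rmax_l 0 T; lra].
Qed.

Lemma tends0_bnd_mult (a b : R -> R) B : (forall t, I0 t -> Rabs (a t) <= B) -> tends0 b ->
  tends0 (fun t => a t * b t).
Proof.
  move=> HB Hb eps He.
  set B' := Rabs B + 1.
  have HB' : 0 < B' by rewrite /B'; have := Rabs_pos B; lra.
  have [T HT] := Hb (eps / B') ltac:(apply: Rdiv_lt_0_compat; lra).
  exists (Rmax 0 T) => t Ht.
  have := Rmax_l 0 T; have := Rmax_r 0 T; move=> ? ?.
  rewrite Rabs_mult.
  have A1 : Rabs (a t) <= B' by rewrite /B'; have := HB t ltac:(rewrite /I0; lra); have := Rle_abs B; lra.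
  have A2 := HT t ltac:(lra).
  have : Rabs (a t) * Rabs (b t) <= B' * Rabs (b t) by apply: Rmult_le_compat_r; [apply: Rabs_pos | done].
  have : B' * Rabs (b t) < B' * (eps / B') by apply: Rmult_lt_compat_l.
  have -> : B' * (eps / B') = eps by field; lra.
  lra.
Qed.

Lemma tends0_plus (u v : R -> R) : tends0 u -> tends0 v -> tends0 (fun t => u t + v t).
Proof.
  move=> Hu Hv eps He; have [T1 H1] := Hu (eps / 2) ltac:(lra); have [T2 H2] := Hv (eps / 2) ltac:(lra).
  exists (Rmax T1 T2) => t Ht.
  have := H1 t ltac:(have := Rmax_l T1 T2; lra); have := H2 t ltac:(have := Rmax_r T1 T2; lra).
  have := Rabs_triang (u t) (v t). lra.
Qed.

Lemma tends0_rsum n (u : 'I_n -> R -> R) : (forall j, tends0 (u j)) -> tends0 (fun t => rsum (fun j => u j t)).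
Proof.
  move=> H; rewrite /rsum.
  elim: (enum 'I_n) => [|a l IH] /=.
  - move=> eps He; exists 0 => t _; rewrite Rabs_R0; lra.
  - exact: (tends0_plus (H a) IH).
Qed.

Lemma tends0_sq (u : R -> R) : tends0 (fun t => u t ^ 2) -> tends0 u.
Proof.
  move=> H eps He; have [T HT] := H (eps ^ 2) ltac:(nra).
  exists T => t Ht; have := HT t Ht.
  rewrite Rabs_pos_eq; last by apply: pow2_ge_0.
  move=> A; apply: Rnot_le_lt => B.
  have : eps ^ 2 <= Rabs (u t) ^ 2 by apply: pow_incr; lra.
  rewrite pow2_abs. lra.
Qed.


Lemma traj_K n U X V gradV c (H : @Hyps n U X V gradV c) x :
  sol U (FF X gradV) I0 x -> (U (x 0) /\ 0 <= V (x 0) <= c) -> forall t, I0 t -> U (x t) /\ 0 <= V (x t) <= c.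
Proof.
  move=> Hs K0; apply: (@claim2 n U X V gradV c H I0 x I0_int) => //; rewrite /I0; lra.
Qed.

Lemma traj_bnd n U X V gradV c (H : @Hyps n U X V gradV c) x f :
  sol U (FF X gradV) I0 x -> (U (x 0) /\ 0 <= V (x 0) <= c) -> cont_on U f ->
  exists B, forall t, I0 t -> Rabs (f (x t)) <= B.
Proof.
  move=> Hs K0 Hf.
  have [B HB] := @cont_bounded n U (fun x => U x /\ 0 <= V x <= c) f (hU H) (hA2 H) ltac:(by move=> y []) Hf.
  exists B => t It; apply: HB; exact: (traj_K H Hs K0 It).
Qed.

Lemma traj_lip n U X V gradV c (H : @Hyps n U X V gradV c) x f :
  sol U (FF X gradV) I0 x -> (U (x 0) /\ 0 <= V (x 0) <= c) -> smooth U f ->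
  exists L, forall a b, I0 a -> I0 b -> Rabs (f (x b) - f (x a)) <= L * Rabs (b - a).
Proof.
  move=> Hs K0 Hf.
  have HU := hU H.
  have [g [Hg1 Hg2]] := smooth_grad HU Hf.
  set Df := fun y => rsum (fun j => g j y * FF X gradV y j).
  have HDf : smooth U Df by apply: smooth_rsum => j; apply: smooth_mult; [apply: Hg2 | exact: (FF_smooth H j)].
  have [B HB] := traj_bnd H Hs K0 (smooth_cont HDf).
  exists B => a b Ia Ib.
  apply: (@lip_I I0 (fun s => f (x s)) (fun s => Df (x s)) a b B I0_int Ia Ib) => //.
  move=> t It; apply: (@CR_sol n U _ f g I0 x t HU Hg1 (fun j => smooth_cont (Hg2 j)) Hs It).
Qed.

Lemma deriv_in_eqv I f t l l' : deriv_in I f t l -> l = l' -> deriv_in I f t l'.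
Proof. by move=> H <-. Qed.

Lemma tends0_le (u v : R -> R) : (forall t, I0 t -> Rabs (u t) <= Rabs (v t)) -> tends0 v -> tends0 u.
Proof.
  move=> Hle Hv eps He; have [T HT] := Hv eps He; exists (Rmax 0 T) => t Ht.
  have := Hle t ltac:(rewrite /I0; have := Rmax_l 0 T; lra); have := HT t ltac:(have := Rmax_r 0 T; lra). lra.
Qed.

Lemma grad_tends0 n U X V gradV c (H : @Hyps n U X V gradV c) x :
  sol U (FF X gradV) I0 x -> (U (x 0) /\ 0 <= V (x 0) <= c) -> forall j, tends0 (fun t => gradV j (x t)).
Proof.
  move=> Hs K0.
  have HU := hU H.
  set W := fun t => V (x t).
  have Wpos : forall t, I0 t -> 0 <= W t by move=> t It; have [Ut _] := traj_K H Hs K0 It; apply: (hA1a H).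
  pose E := fun u => exists t, I0 t /\ u = - W t.
  have Eb : bound E by exists 0 => u [t [It ->]]; have := Wpos t It; lra.
  have Ene : exists u, E u by exists (- W 0); exists 0; split => //; rewrite /I0; lra.
  have [m [Hm1 Hm2]] := completeness E Eb Ene.
  set Lw := - m.
  have HLw : forall t, I0 t -> Lw <= W t.
    move=> t It; have : - W t <= m by apply: Hm1; exists t. rewrite /Lw; lra.
  have Happ : forall eps, 0 < eps -> exists T, I0 T /\ W T < Lw + eps.
    move=> eps He; apply: NNPP => Hno.
    have : m <= m - eps.
      apply: Hm2 => u [t [It ->]]. apply: Rnot_lt_le => Hlt; apply: Hno; exists t; split => //; rewrite /Lw; lra.
    lra.
  have Hf : tends0 (fun t => W t + - Lw).
    move=> eps He; have [T [IT HT]] := Happ eps He; exists T => t Ht.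
    have It : I0 t by rewrite /I0 in IT *; lra.
    have := @V_nonincr n U X V gradV c H I0 x T t I0_int Hs IT It Ht.
    have := HLw t It. rewrite /W in HT *. move=> ? ?; rewrite Rabs_pos_eq; lra.
  set S := fun y => rsum (fun j => gradV j y * gradV j y).
  have HS : smooth U (fun y => (-1) * S y).
    apply: smooth_mult; first by apply: smooth_const.
    apply: smooth_rsum => j; apply: smooth_mult; exact: (grad_smooth H j).
  have [L HL] := traj_lip H Hs K0 HS.
  have Hg := @barbalat (fun t => W t + - Lw) (fun t => (-1) * S (x t)) (fun _ => 0) L
    ltac:(move=> t It; apply: deriv_in_eqv; [apply: deriv_in_plus; [exact: (@dV_sol n U X V gradV c H I0 x t Hs It) | apply: deriv_in_const] |
          rewrite /S Rplus_0_r; ring_simplify; congr Ropp; apply: rsum_ext => j; ring])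
    Hf ltac:(move=> eps He; exists 0 => t _; rewrite Rabs_R0; lra) HL.
  move=> j; apply: tends0_sq.
  apply: (@tends0_le (fun t => gradV j (x t) ^ 2) _ _ Hg) => t It.
  rewrite Rabs_mult Rabs_Ropp Rabs_R1 Rmult_1_l.
  rewrite (Rabs_pos_eq (gradV j (x t) ^ 2)); last by apply: pow2_ge_0.
  have Hnn : 0 <= S (x t) by rewrite /S; apply: rsum_nonneg => k; nra.
  rewrite Rabs_pos_eq //.
  have := @rsum_mem n (fun k => gradV k (x t) * gradV k (x t)) j ltac:(move=> k; nra).
  rewrite /S; simpl; lra.
Qed.

Lemma lie_tends0 n U X V gradV c (H : @Hyps n U X V gradV c) x :
  sol U (FF X gradV) I0 x -> (U (x 0) /\ 0 <= V (x 0) <= c) ->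
  forall k g h, lie_iter U X k g h -> smooth U g -> tends0 (fun t => g (x t)) -> tends0 (fun t => h (x t)).
Proof.
  move=> Hs K0 k g h Hl.
  have HU := hU H.
  elim: Hl => [g0 _ H0 | k0 g0 h0 p Hl IH Hp Hg0 Ht0] //.
  have Hh := IH Hg0 Ht0.
  have Hh0s : smooth U h0 by apply: (lie_smooth HU (hX H) Hg0 Hl).
  have Hps : forall j, smooth U (p j) by move=> j; apply: (@smooth_partial n U h0 j (p j) HU Hh0s); apply: Hp.
  set h' := fun y => rsum (fun j => X y j * p j y).
  have Hh's : smooth U h' by apply: smooth_rsum => j; apply: smooth_mult; [apply: (hX H) | apply: Hps].
  have [L HL] := traj_lip H Hs K0 Hh's.
  pose e := fun t => (-1) * rsum (fun j => p j (x t) * gradV j (x t)).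
  have He : tends0 e.
    apply: (@tends0_bnd_mult (fun _ => -1) _ 1); first by move=> t _; rewrite Rabs_Ropp Rabs_R1; lra.
    apply: tends0_rsum => j.
    have [B HB] := traj_bnd H Hs K0 (smooth_cont (Hps j)).
    apply: (@tends0_bnd_mult (fun t => p j (x t)) _ B HB).
    exact: (grad_tends0 H Hs K0 j).
  apply: (@barbalat (fun t => h0 (x t)) (fun t => h' (x t)) e L) => //.
  move=> t It.
  apply: deriv_in_eqv.
  - apply: (@CR_sol n U _ h0 p I0 x t HU Hp (fun j => smooth_cont (Hps j)) Hs It).
  - rewrite /h' /e /FF.
    have -> : (-1) * rsum (fun j => p j (x t) * gradV j (x t)) = rsum (fun j => (-1) * (p j (x t) * gradV j (x t))) by rewrite rsum_scal.
    rewrite -rsum_plus; apply: rsum_ext => j; ring.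
Qed.

Lemma claim3 n U X V gradV c (H : @Hyps n U X V gradV c) :
  forall x, sol U (FF X gradV) (fun t => 0 <= t) x -> (U (x 0) /\ 0 <= V (x 0) <= c) ->
    converges_to_set x (fun x => U x /\ V x = 0).
Proof.
  move=> x Hs K0 eps He.
  have HU := hU H.
  apply: NNPP => Hno.
  have Hfar : forall N : nat, exists t, INR N <= t /\ forall y, (U y /\ V y = 0) -> ~ enorm (vsub (x t) y) < eps.
    move=> N; apply: NNPP => H1; apply: Hno; exists (INR N) => t Ht.
    apply: NNPP => H2; apply: H1; exists t; split => // y Zy Hy; apply: H2; by exists y.
  pose tm := fun N => proj1_sig (constructive_indefinite_description _ (Hfar N)).
  have Htm : forall N, INR N <= tm N /\ forall y, (U y /\ V y = 0) -> ~ enorm (vsub (x (tm N)) y) < eps.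
    move=> N; exact: (proj2_sig (constructive_indefinite_description _ (Hfar N))).
  have Itm : forall N, I0 (tm N) by move=> N; rewrite /I0; have := pos_INR N; have := proj1 (Htm N); lra.
  have Ku : forall N, U (x (tm N)) /\ 0 <= V (x (tm N)) <= c by move=> N; apply: (traj_K H Hs K0).
  have [y [Ky Hcl]] := @cluster n (fun x => U x /\ 0 <= V x <= c) (fun N => x (tm N)) (hA2 H) Ku.
  have Sy : Sset U X V y.
    split; first by case: Ky.
    move=> i g Hg k h Hl.
    have Eg : forall z, U z -> gradV i z = g z by move=> z Uz; apply: (@partial_unique n V i z _ _ (hgrad H i z Uz)); apply: Hg.
    have Hgs : smooth U g by apply: (@smooth_ext n U (gradV i) g HU Eg); exact: (grad_smooth H i).
    have Hgt : tends0 (fun t => g (x t)).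
      apply: (@tends0_ext (fun t => gradV i (x t))); last exact: (grad_tends0 H Hs K0 i).
      move=> t It; apply: Eg; by have [] := traj_K H Hs K0 It.
    have Hht := @lie_tends0 n U X V gradV c H x Hs K0 k g h Hl Hgs Hgt.
    have Hhs : smooth U h by apply: (lie_smooth HU (hX H) Hgs Hl).
    suff A : Rabs (h y) <= 0 by have := Rabs_pos (h y); split_Rabs; lra.
    apply: le_epsilon => eta Heta. rewrite Rplus_0_l.
    have [rho [Hrho Hb]] := @cont_box n U h y HU (smooth_cont Hhs) (proj1 Ky) (eta / 2) ltac:(lra).
    have [T HT] := Hht (eta / 2) ltac:(lra).
    have [N HN] := INR_unbounded T.
    have [m [Hm Hbm]] := Hcl rho Hrho N.
    have Hmt : T <= tm m.
      have := proj1 (Htm m); have : INR N <= INR m by apply: le_INR; apply/leP. lra.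
    have A1 := HT (tm m) Hmt.
    have [_ A2] := Hb _ Hbm.
    have := Rabs_triang (h (x (tm m))) (- (h (x (tm m)) - h y)). rewrite Rabs_Ropp.
    have -> : h (x (tm m)) + - (h (x (tm m)) - h y) = h y by ring.
    lra.
  have Vy : V y = 0 by apply: (hA3 H).
  have HN := pos_INR n.
  have [m [_ Hbm]] := Hcl (eps / (INR n + 1)) ltac:(apply: Rdiv_lt_0_compat; lra) 0%nat.
  apply: (proj2 (Htm m) y) => //; first by split => //; case: Ky.
  by apply: enorm_box.
Qed.

Unset Implicit Arguments.

Theorem theorem2 (n : nat) (U : Rn n -> Prop) (X : Rn n -> Rn n) (V : Rn n -> R)
  (gradV : 'I_n -> Rn n -> R) (c : R)
  (hU : is_open U)
  (hX : forall i, smooth U (fun x => X x i))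
  (hV : smooth U V)
  (hgrad : forall i x, U x -> partial V i x (gradV i x))
  (* A1 *)
  (hA1a : forall x, U x -> 0 <= V x)
  (hA1b : exists x, U x /\ V x = 0)
  (hA1c : forall x, U x -> rsum (fun i => gradV i x * X x i) = 0)
  (* A2 *)
  (hc : 0 < c)
  (hA2 : is_compact (fun x => U x /\ 0 <= V x <= c))
  (* A3' *)
  (hA3 : forall x, Sset U X V x -> (U x /\ 0 <= V x <= c) -> V x = 0) :
  let K := fun x => U x /\ 0 <= V x <= c in
  let Z := fun x => U x /\ V x = 0 in
  let F := fun x i => X x i - gradV i x in
  (forall x0, K x0 -> exists x, sol U F (fun t => 0 <= t) x /\ x 0 = x0) /\
  (forall (I : R -> Prop) (x : R -> Rn n),
      is_interval I -> I 0 -> (forall t, I t -> 0 <= t) ->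
      sol U F I x -> K (x 0) -> forall t, I t -> K (x t)) /\
  (forall x, sol U F (fun t => 0 <= t) x -> K (x 0) -> converges_to_set x Z) /\
  invariant_set U X Z /\ invariant_set U F Z.
Proof.
  have H : Hyps U X V gradV c by split.
  move=> K Z F.
  split; first exact: (claim1 H).
  split; first exact: (claim2 H).
  split; first exact: (claim3 H).
  split; first exact: (claim4 H).
  exact: (claim5 H).
Qed.
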